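(* Consider the system of ordinary differential equations \[ \begin{aligned} \frac{dS}{dt} &= \Lambda + \eta R + \theta V - (\beta I + \pi + \mu)S,\\ \frac{dV}{dt} &= \pi S - (\theta + \mu)V,\\ \frac{dE}{dt} &= \beta S I - (\gamma + \mu)E,\\ \frac{dI}{dt} &= \gamma E - (\delta + \tau + \mu)I,\\ \frac{dT}{dt} &= \delta I - (\alpha + \omega + \mu)T,\\ \frac{dR}{dt} &= \alpha T - (\eta + \mu)R, \end{aligned} \] where $\Lambda,\beta,\gamma,\mu,\pi,\eta,\theta,\delta,\tau,\alpha,\omega$ are positive constants. Let \[ \mathscr{E}_0=\left(\frac{\Lambda(\theta+\mu)}{\mu(\theta+\pi+\mu)},\ \frac{\Lambda\pi}{\mu(\theta+\pi+\mu)},\ 0,0,0,0\right) \] be the disease-free equilibrium (in the coordinates $(S,V,E,I,T,R)$) and \[ \mathscr{R}_v=\frac{\Lambda\beta\gamma(\theta+\mu)}{\mu(\delta+\tau+\mu)(\theta+\pi+\mu)(\gamma+\mu)}. \] Then $\mathscr{E}_0$ is locally asymptotically stable if $\mathscr{R}_v<1$ and unstable if $\mathscr{R}_v>1$.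
   Context: SVEITRS model of tuberculosis transmission: $S,V,E,I,T,R$ denote the susceptible, vaccinated, exposed, infectious, treated and recovered populations; all parameters positive. $\mathscr{R}_v$ is called the effective (control) reproduction number. *)

(* Defs.v *)
From Stdlib Require Import Reals Lra.
From Coquelicot Require Import Coquelicot.
Open Scope R_scope.

Record params := mkParams {
  Lam : R; beta : R; gamma : R; mu : R; pi_ : R; eta : R;
  theta : R; delta : R; tau : R; alpha : R; omega : R }.

Definition params_pos (p : params) : Prop :=
  0 < Lam p /\ 0 < beta p /\ 0 < gamma p /\ 0 < mu p /\ 0 < pi_ p /\
  0 < eta p /\ 0 < theta p /\ 0 < delta p /\ 0 < tau p /\ 0 < alpha p /\
  0 < omega p.

Record state := mkState { sS : R; sV : R; sE : R; sI : R; sT : R; sR : R }.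

Definition fS p (x : state) : R :=
  Lam p + eta p * sR x + theta p * sV x - (beta p * sI x + pi_ p + mu p) * sS x.
Definition fV p (x : state) : R := pi_ p * sS x - (theta p + mu p) * sV x.
Definition fE p (x : state) : R := beta p * sS x * sI x - (gamma p + mu p) * sE x.
Definition fI p (x : state) : R := gamma p * sE x - (delta p + tau p + mu p) * sI x.
Definition fT p (x : state) : R := delta p * sI x - (alpha p + omega p + mu p) * sT x.
Definition fR p (x : state) : R := alpha p * sT x - (eta p + mu p) * sR x.

Definition dist6 (x y : state) : R :=
  sqrt ((sS x - sS y)^2 + (sV x - sV y)^2 + (sE x - sE y)^2 +
        (sI x - sI y)^2 + (sT x - sT y)^2 + (sR x - sR y)^2).

Definition is_solution (p : params) (b : Rbar) (x : R -> state) : Prop :=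
  Rbar_lt (Finite 0) b /\
  (forall t, 0 < t -> Rbar_lt (Finite t) b ->
     is_derive (fun u => sS (x u)) t (fS p (x t)) /\
     is_derive (fun u => sV (x u)) t (fV p (x t)) /\
     is_derive (fun u => sE (x u)) t (fE p (x t)) /\
     is_derive (fun u => sI (x u)) t (fI p (x t)) /\
     is_derive (fun u => sT (x u)) t (fT p (x t)) /\
     is_derive (fun u => sR (x u)) t (fR p (x t))) /\
  filterlim (fun u => sS (x u)) (at_right 0) (locally (sS (x 0))) /\
  filterlim (fun u => sV (x u)) (at_right 0) (locally (sV (x 0))) /\
  filterlim (fun u => sE (x u)) (at_right 0) (locally (sE (x 0))) /\
  filterlim (fun u => sI (x u)) (at_right 0) (locally (sI (x 0))) /\
  filterlim (fun u => sT (x u)) (at_right 0) (locally (sT (x 0))) /\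
  filterlim (fun u => sR (x u)) (at_right 0) (locally (sR (x 0))).

Definition lyap_stable (p : params) (xe : state) : Prop :=
  forall eps, 0 < eps -> exists d, 0 < d /\
    forall (b : Rbar) (x : R -> state), is_solution p b x ->
      dist6 (x 0) xe < d ->
      forall t, 0 <= t -> Rbar_lt (Finite t) b -> dist6 (x t) xe < eps.

Definition loc_attractive (p : params) (xe : state) : Prop :=
  exists d, 0 < d /\
    forall x : R -> state, is_solution p p_infty x ->
      dist6 (x 0) xe < d ->
      is_lim (fun t => dist6 (x t) xe) p_infty 0.

Definition loc_asym_stable (p : params) (xe : state) : Prop :=
  lyap_stable p xe /\ loc_attractive p xe.

Definition unstable (p : params) (xe : state) : Prop := ~ lyap_stable p xe.

Definition E0 (p : params) : state :=
  mkState (Lam p * (theta p + mu p) / (mu p * (theta p + pi_ p + mu p)))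
          (Lam p * pi_ p / (mu p * (theta p + pi_ p + mu p))) 0 0 0 0.

Definition Rv (p : params) : R :=
  Lam p * beta p * gamma p * (theta p + mu p) /
  (mu p * (delta p + tau p + mu p) * (theta p + pi_ p + mu p) * (gamma p + mu p)).

(* Main.v *)
Require Import Defs.
From Stdlib Require Import Reals Lra Psatz.
From Coquelicot Require Import Coquelicot.
Open Scope R_scope.

Lemma ball_R (x y : R) (e : posreal) : ball x e y <-> Rabs (y - x) < e.
Proof. unfold ball; simpl; unfold AbsRing_ball, abs, minus, plus, opp; simpl. tauto. Qed.

Lemma locally_R (x : R) (P : R -> Prop) :
  locally x P <-> exists d, 0 < d /\ forall y, Rabs (y - x) < d -> P y.
Proof.
  split.
  - intros [d Hd]. exists d. split. apply cond_pos. intros y Hy. apply Hd. apply ball_R. exact Hy.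
  - intros [d [Hd H]]. exists (mkposreal d Hd). intros y Hy. apply H. apply ball_R in Hy. exact Hy.
Qed.

Lemma cont_delta f x eps : continuity_pt f x -> 0 < eps ->
  exists d, 0 < d /\ forall y, Rabs (y - x) < d -> Rabs (f y - f x) < eps.
Proof.
  intros Hc He. apply continuity_pt_locally with (eps := mkposreal eps He) in Hc.
  apply locally_R in Hc. exact Hc.
Qed.

Lemma cont_of_delta f x : (forall eps, 0 < eps ->
  exists d, 0 < d /\ forall y, Rabs (y - x) < d -> Rabs (f y - f x) < eps) ->
  continuity_pt f x.
Proof.
  intros H. apply continuity_pt_locally. intros eps. apply locally_R.
  apply H. apply cond_pos.
Qed.

Lemma deriv_cont (g : R -> R) t (l:R) : is_derive g t l -> continuity_pt g t.
Proof.
  intros H. apply continuity_pt_filterlim. apply (ex_derive_continuous g t). exists l. exact H.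
Qed.

Definition rc (g : R -> R) := continuity_pt (fun u => g (Rmax 0 u)) 0.

Lemma rc_of_filterlim g : filterlim g (at_right 0) (locally (g 0)) -> rc g.
Proof.
  intros H. unfold rc. apply cont_of_delta. intros eps He.
  apply filterlim_locally with (eps := mkposreal eps He) in H.
  unfold at_right, within in H. apply locally_R in H. destruct H as [d [Hd H]].
  exists d. split; auto. intros y Hy.
  rewrite (Rmax_left 0 0) by lra.
  destruct (Rle_lt_dec y 0).
  - rewrite Rmax_left by lra. rewrite Rminus_eq_0, Rabs_R0. exact He.
  - rewrite Rmax_right by lra. specialize (H y Hy r). apply ball_R in H. exact H.
Qed.

Lemma filterlim_of_rc g : rc g -> filterlim g (at_right 0) (locally (g 0)).
Proof.
  intros H. apply filterlim_locally. intros eps. unfold at_right, within.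
  apply locally_R. destruct (cont_delta _ _ eps H (cond_pos eps)) as [d [Hd Hd']].
  exists d. split; auto. intros y Hy Hy0. apply ball_R.
  specialize (Hd' y Hy). rewrite Rmax_right in Hd' by lra. rewrite Rmax_left in Hd' by lra.
  exact Hd'.
Qed.

Lemma cont_max_pos g t : 0 < t -> continuity_pt g t -> continuity_pt (fun u => g (Rmax 0 u)) t.
Proof.
  intros Ht Hc. apply continuity_pt_locally_ext with (f := g) (a := t).
  exact Ht. intros y Hy. unfold Rdist in Hy. rewrite Rmax_right. reflexivity.
  apply Rabs_def2 in Hy. lra. exact Hc.
Qed.

Lemma deriv_max_pos (g : R -> R) t (l : R) : 0 < t -> is_derive g t l -> is_derive (fun u => g (Rmax 0 u)) t l.
Proof.
  intros Ht H. apply is_derive_ext_loc with (f := g); auto.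
  apply locally_R. exists t. split; auto. intros y Hy. rewrite Rmax_right. reflexivity.
  apply Rabs_def2 in Hy. lra.
Qed.

Lemma mono_le (g g' : R -> R) T : 0 < T ->
  (forall t, 0 < t < T -> is_derive g t (g' t)) ->
  (forall t, 0 < t < T -> g' t <= 0) ->
  rc g -> continuity_pt g T -> g T <= g 0.
Proof.
  intros HT Hd Hn Hr Hc.
  destruct (MVT_gen (fun u => g (Rmax 0 u)) 0 T (fun t => Rmin (g' t) 0)) as [c [Hc1 Hc2]].
  - rewrite Rmin_left, Rmax_right by lra. intros x Hx. apply deriv_max_pos. lra.
    rewrite Rmin_left. apply Hd. lra. apply Hn. lra.
  - rewrite Rmin_left, Rmax_right by lra. intros x Hx.
    destruct (Req_dec x 0). subst. exact Hr.
    destruct (Req_dec x T). subst. apply cont_max_pos; auto.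
    apply cont_max_pos. lra. apply (deriv_cont _ _ (g' x)). apply Hd. lra.
  - simpl in Hc2. rewrite (Rmax_right 0 T) in Hc2 by lra. rewrite (Rmax_left 0 0) in Hc2 by lra.
    assert (Rmin (g' c) 0 <= 0) by apply Rmin_r. nra.
Qed.

Lemma first_exit g K t1 : 0 <= t1 -> g 0 < K -> K <= g t1 -> rc g ->
  (forall t, 0 < t <= t1 -> continuity_pt g t) ->
  exists tau, 0 < tau <= t1 /\ K <= g tau /\ forall s, 0 <= s < tau -> g s < K.
Proof.
  intros Ht1 H0 H1 Hr Hc.
  assert (Ht1' : 0 < t1). { destruct (Req_dec t1 0). subst. lra. lra. }
  set (h := fun u => g (Rmax 0 u)).
  assert (Hh : forall u, 0 <= u -> h u = g u). { intros u Hu. unfold h. rewrite Rmax_right; auto. }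
  assert (Hhc : forall u, 0 <= u <= t1 -> continuity_pt h u).
  { intros u Hu. destruct (Req_dec u 0). subst. exact Hr. apply cont_max_pos. lra. apply Hc. lra. }
  set (E := fun s => 0 <= s <= t1 /\ forall u, 0 <= u <= s -> g u < K).
  assert (HB : bound E). { exists t1. intros s [Hs _]. lra. }
  assert (HE : exists x, E x). { exists 0. split. lra. intros u Hu. replace u with 0 by lra. exact H0. }
  destruct (completeness E HB HE) as [tau [Hub Hlub]].
  assert (Htau1 : tau <= t1). { apply Hlub. intros s [Hs _]. lra. }
  assert (Hbelow : forall s, 0 <= s < tau -> g s < K).
  { intros s Hs. destruct (Rle_lt_dec tau s) as [l|l]. lra.
    destruct (Classical_Prop.classic (exists e, E e /\ s <= e)) as [[e [[He1 He2] Hse]]|Hn].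
    - apply He2. lra.
    - exfalso. assert (tau <= s). { apply Hlub. intros e He. destruct (Rle_lt_dec e s). auto.
        exfalso. apply Hn. exists e. split; auto. lra. } lra. }
  assert (Htau0 : 0 < tau).
  { destruct (cont_delta h 0 (K - g 0) (Hhc 0 ltac:(lra)) ltac:(lra)) as [d [Hd Hd']].
    set (e := Rmin (d/2) t1).
    assert (E e). { split. unfold e. split. apply Rmin_glb; lra. apply Rmin_r.
      intros u Hu. rewrite <- Hh by lra. specialize (Hd' u).
      unfold h in Hd' at 2. rewrite Rmax_left in Hd' by lra.
      assert (Rabs (u - 0) < d). { rewrite Rabs_right by lra. assert (e <= d/2) by apply Rmin_l. lra. }
      specialize (Hd' H). apply Rabs_def2 in Hd'. lra. }
    apply Hub in H. assert (0 < e). { unfold e. apply Rmin_glb_lt; lra. } lra. }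
  exists tau. split. lra. split; auto.
  destruct (Rle_lt_dec K (g tau)) as [l|l]. exact l. exfalso.
  destruct (Req_dec tau t1). { subst. lra. }
  destruct (cont_delta h tau (K - g tau) (Hhc tau ltac:(lra)) ltac:(lra)) as [d [Hd Hd']].
  set (e := Rmin (tau + d/2) t1).
  assert (E e).
  { split. unfold e. split. apply Rmin_glb; lra. apply Rmin_r.
    intros u Hu. destruct (Rlt_le_dec u tau). apply Hbelow. lra.
    rewrite <- Hh by lra. specialize (Hd' u). rewrite (Hh tau) in Hd' by lra.
    assert (e <= tau + d/2) by apply Rmin_l.
    assert (Rabs (u - tau) < d). { rewrite Rabs_right by lra. lra. }
    specialize (Hd' H3). apply Rabs_def2 in Hd'. lra. }
  apply Hub in H2. assert (tau < e). { unfold e. apply Rmin_glb_lt; lra. } lra.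
Qed.

Definition nrm6 (w : nat -> R) : R :=
  Rabs (w 0%nat) + Rabs (w 1%nat) + Rabs (w 2%nat) + Rabs (w 3%nat) + Rabs (w 4%nat) + Rabs (w 5%nat).

Definition Lip (F : nat -> (nat -> R) -> R) (K : R) :=
  forall i y z, Rabs (F i y - F i z) <= K * nrm6 (fun j => y j - z j).

Lemma nrm6_ge0 w : 0 <= nrm6 w.
Proof. unfold nrm6. pose proof (Rabs_pos (w 0%nat)). pose proof (Rabs_pos (w 1%nat)).
  pose proof (Rabs_pos (w 2%nat)). pose proof (Rabs_pos (w 3%nat)). pose proof (Rabs_pos (w 4%nat)).
  pose proof (Rabs_pos (w 5%nat)). lra. Qed.

Lemma nrm6_comp w i : (i < 6)%nat -> Rabs (w i) <= nrm6 w.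
Proof. intros Hi. unfold nrm6. pose proof (Rabs_pos (w 0%nat)). pose proof (Rabs_pos (w 1%nat)).
  pose proof (Rabs_pos (w 2%nat)). pose proof (Rabs_pos (w 3%nat)). pose proof (Rabs_pos (w 4%nat)).
  pose proof (Rabs_pos (w 5%nat)).
  destruct i as [|[|[|[|[|[|i]]]]]]; try lra. lia. Qed.

Lemma nrm6_bound w B : (forall i, (i < 6)%nat -> Rabs (w i) <= B) -> nrm6 w <= 6 * B.
Proof. intros H. unfold nrm6.
  pose proof (H 0%nat ltac:(lia)). pose proof (H 1%nat ltac:(lia)). pose proof (H 2%nat ltac:(lia)).
  pose proof (H 3%nat ltac:(lia)). pose proof (H 4%nat ltac:(lia)). pose proof (H 5%nat ltac:(lia)). lra. Qed.

Lemma nrm6_triang a b c : nrm6 (fun j => a j - c j) <= nrm6 (fun j => a j - b j) + nrm6 (fun j => b j - c j).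
Proof. unfold nrm6.
  assert (forall k, Rabs (a k - c k) <= Rabs (a k - b k) + Rabs (b k - c k)).
  { intros k. replace (a k - c k) with ((a k - b k) + (b k - c k)) by ring. apply Rabs_triang. }
  pose proof (H 0%nat). pose proof (H 1%nat). pose proof (H 2%nat). pose proof (H 3%nat).
  pose proof (H 4%nat). pose proof (H 5%nat). lra. Qed.

Lemma cont_compF F K i (Y : nat -> R -> R) s : 0 < K -> Lip F K ->
  (forall j, (j < 6)%nat -> continuity_pt (Y j) s) ->
  continuity_pt (fun u => F i (fun j => Y j u)) s.
Proof.
  intros HK HL HY. apply cont_of_delta. intros eps He.
  set (e := eps / (6 * K) / 2).
  assert (He' : 0 < e) by (unfold e; apply Rmult_lt_0_compat; [apply Rdiv_lt_0_compat; lra|lra]).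
  destruct (cont_delta _ _ e (HY 0%nat ltac:(lia)) He') as [d0 [Hd0 H0]].
  destruct (cont_delta _ _ e (HY 1%nat ltac:(lia)) He') as [d1 [Hd1 H1]].
  destruct (cont_delta _ _ e (HY 2%nat ltac:(lia)) He') as [d2 [Hd2 H2]].
  destruct (cont_delta _ _ e (HY 3%nat ltac:(lia)) He') as [d3 [Hd3 H3]].
  destruct (cont_delta _ _ e (HY 4%nat ltac:(lia)) He') as [d4 [Hd4 H4]].
  destruct (cont_delta _ _ e (HY 5%nat ltac:(lia)) He') as [d5 [Hd5 H5]].
  exists (Rmin d0 (Rmin d1 (Rmin d2 (Rmin d3 (Rmin d4 d5))))). split.
  { repeat apply Rmin_pos; auto. }
  intros y Hy.
  assert (Hm : forall a b, Rmin a b <= a /\ Rmin a b <= b) by (intros; split; [apply Rmin_l|apply Rmin_r]).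
  pose proof (Hm d0 (Rmin d1 (Rmin d2 (Rmin d3 (Rmin d4 d5))))).
  pose proof (Hm d1 (Rmin d2 (Rmin d3 (Rmin d4 d5)))).
  pose proof (Hm d2 (Rmin d3 (Rmin d4 d5))).
  pose proof (Hm d3 (Rmin d4 d5)). pose proof (Hm d4 d5).
  eapply Rle_lt_trans. apply HL.
  assert (nrm6 (fun j => Y j y - Y j s) <= 6 * e).
  { apply nrm6_bound. intros j Hj.
    destruct j as [|[|[|[|[|[|j]]]]]]; [apply Rlt_le; first [apply H0|apply H1|apply H2|apply H3|apply H4|apply H5]; lra ..|lia]. }
  assert (K * (6 * e) < eps). { unfold e. field_simplify; lra. }
  pose proof (nrm6_ge0 (fun j => Y j y - Y j s)). nra.
Qed.

Lemma cont_to_continuous g t : continuity_pt g t -> continuous g t.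
Proof. intros H. apply continuity_pt_filterlim. exact H. Qed.

Lemma ex_RInt_cont g a b : (forall s, continuity_pt g s) -> ex_RInt g a b.
Proof. intros H. apply (ex_RInt_continuous (V:=R_CompleteNormedModule)). intros z _. apply cont_to_continuous. apply H. Qed.

Lemma deriv_RInt g t : (forall s, continuity_pt g s) -> is_derive (fun u => RInt g 0 u) t (g t).
Proof.
  intros H. apply is_derive_RInt with (a := 0).
  - apply locally_R. exists 1. split. lra. intros y _. apply RInt_correct. apply ex_RInt_cont. exact H.
  - apply cont_to_continuous. apply H.
Qed.

Lemma cont_RInt g t : (forall s, continuity_pt g s) -> continuity_pt (fun u => RInt g 0 u) t.
Proof. intros H. eapply deriv_cont. apply deriv_RInt. exact H. Qed.

Lemma RInt_bound_prim g (phi h : R -> R) t : 0 <= t -> (forall s, continuity_pt g s) ->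
  (forall s, continuity_pt h s) -> (forall s, is_derive phi s (h s)) ->
  (forall s, 0 <= s <= t -> Rabs (g s) <= h s) ->
  Rabs (RInt g 0 t) <= phi t - phi 0.
Proof.
  intros Ht Hg Hh Hp Hb.
  eapply Rle_trans. apply abs_RInt_le. exact Ht. apply ex_RInt_cont. exact Hg.
  replace (phi t - phi 0) with (RInt h 0 t).
  - apply RInt_le. exact Ht.
    apply ex_RInt_cont. intros s. apply continuity_pt_comp with (f1 := g) (f2 := Rabs). apply Hg. apply Rcontinuity_abs.
    apply ex_RInt_cont. exact Hh.
    intros x Hx. apply Hb. lra.
  - apply is_RInt_unique. apply (is_RInt_derive phi h). intros x _. apply Hp.
    intros x _. apply cont_to_continuous. apply Hh.
Qed.

Lemma RInt_bound_exp g C gam t : 0 <= t -> 0 < gam -> (forall s, continuity_pt g s) ->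
  (forall s, 0 <= s <= t -> Rabs (g s) <= C * exp (gam * s)) ->
  Rabs (RInt g 0 t) <= C * exp (gam * t) / gam.
Proof.
  intros Ht Hgam Hg Hb.
  assert (Hb0 : 0 <= C). { pose proof (Hb 0 ltac:(lra)). pose proof (Rabs_pos (g 0)).
    pose proof (exp_pos (gam * 0)). nra. }
  eapply Rle_trans. apply (RInt_bound_prim g (fun s => C * exp (gam * s) / gam) (fun s => C * exp (gam * s))); auto.
  - intros s. apply continuity_pt_mult. apply continuity_pt_const. intros a b; reflexivity.
    apply continuity_pt_comp with (f1 := fun s => gam * s) (f2 := exp).
    apply continuity_pt_mult. apply continuity_pt_const. intros a b; reflexivity. apply continuity_pt_id.
    apply derivable_continuous_pt. apply derivable_pt_exp.
  - intros s. auto_derive. auto. field. lra.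
  - pose proof (exp_pos (gam * 0)). assert (0 <= C * exp (gam * 0) / gam).
    { apply Rmult_le_pos. apply Rmult_le_pos; lra. apply Rlt_le, Rinv_0_lt_compat; lra. } lra.
Qed.

Lemma deriv_cRInt c g t : (forall s, continuity_pt g s) -> is_derive (fun u => c + RInt g 0 u) t (g t).
Proof.
  intros H. pose proof (deriv_RInt g t H) as D.
  pose proof (@is_derive_const R_AbsRing R_NormedModule c t) as C0.
  pose proof (is_derive_plus _ _ t _ _ C0 D) as P.
  replace (g t) with (plus (@zero R_AbelianMonoid) (g t)). exact P.
  unfold plus, zero; simpl. ring.
Qed.

Lemma exp_ge1 x : 0 <= x -> 1 <= exp x.
Proof. intros H. pose proof (exp_ineq1_le x). lra. Qed.

Lemma Rplus_minus_l' (a b : R) : a + b - a = b.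
Proof. ring. Qed.

Fixpoint PX (F : nat -> (nat -> R) -> R) (x0 : nat -> R) (n : nat) : nat -> R -> R :=
  match n with
  | O => fun i _ => x0 i
  | S m => fun i t => x0 i + RInt (fun s => F i (fun j => PX F x0 m j s)) 0 t
  end.


Lemma PX_cont F K x0 n i t : 0 < K -> Lip F K -> continuity_pt (PX F x0 n i) t.
Proof.
  intros HK HL. revert i t. induction n as [|n IH]; intros i t; simpl.
  - apply continuity_pt_const. intros a b; reflexivity.
  - apply continuity_pt_plus. apply continuity_pt_const. intros a b; reflexivity.
    apply cont_RInt. intros s. apply (cont_compF F K); auto.
Qed.

Lemma G_cont F K x0 n i s : 0 < K -> Lip F K -> continuity_pt (fun u => F i (fun j => PX F x0 n j u)) s.
Proof. intros HK HL. apply (cont_compF F K); auto. intros j _. apply (PX_cont F K); auto. Qed.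

Definition gam (K : R) := 12 * K.
Definition Dc (F : nat -> (nat -> R) -> R) x0 K := nrm6 (fun i => F i x0) / gam K.

Lemma PX_step F K x0 n t : 0 < K -> Lip F K -> 0 <= t ->
  nrm6 (fun j => PX F x0 (S n) j t - PX F x0 n j t) <= Dc F x0 K * (/2)^n * exp (gam K * t).
Proof.
  intros HK HL. revert t. induction n as [|n IH]; intros t Ht.
  - simpl. unfold Dc.
    assert (Hc : forall i, Rabs (x0 i + RInt (fun _ => F i (fun j => x0 j)) 0 t - x0 i)
                 <= Rabs (F i x0) * exp (gam K * t) / gam K).
    { intros i. rewrite (Rplus_minus_l' (x0 i)).
      apply RInt_bound_exp; auto. unfold gam; lra. intros s. apply continuity_pt_const. intros a b; reflexivity.
      intros s Hs. assert (1 <= exp (gam K * s)). { apply exp_ge1. unfold gam; nra. }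
      pose proof (Rabs_pos (F i x0)).
      replace (fun j => x0 j) with x0 by reflexivity. nra. }
    unfold nrm6. 
    pose proof (Hc 0%nat). pose proof (Hc 1%nat). pose proof (Hc 2%nat). pose proof (Hc 3%nat).
    pose proof (Hc 4%nat). pose proof (Hc 5%nat).
    assert (Hg : 0 < gam K) by (unfold gam; lra).
    replace ((Rabs (F 0%nat x0) + Rabs (F 1%nat x0) + Rabs (F 2%nat x0) + Rabs (F 3%nat x0) +
       Rabs (F 4%nat x0) + Rabs (F 5%nat x0)) / gam K * 1 * exp (gam K * t)) with
      (Rabs (F 0%nat x0) * exp (gam K * t) / gam K + Rabs (F 1%nat x0) * exp (gam K * t) / gam K +
       Rabs (F 2%nat x0) * exp (gam K * t) / gam K + Rabs (F 3%nat x0) * exp (gam K * t) / gam K +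
       Rabs (F 4%nat x0) * exp (gam K * t) / gam K + Rabs (F 5%nat x0) * exp (gam K * t) / gam K)
      by (field; lra).
    lra.
  - assert (HD : 0 <= Dc F x0 K). { unfold Dc, gam. apply Rmult_le_pos. apply nrm6_ge0.
      apply Rlt_le, Rinv_0_lt_compat; lra. }
    replace (Dc F x0 K * (/ 2) ^ S n * exp (gam K * t))
      with (6 * (K * (Dc F x0 K * (/ 2) ^ n) * exp (gam K * t) / gam K)) by (unfold gam; simpl; field; lra).
    apply nrm6_bound. intros i Hi.
    change (Rabs ((x0 i + RInt (fun s => F i (fun j => PX F x0 (S n) j s)) 0 t) -
                  (x0 i + RInt (fun s => F i (fun j => PX F x0 n j s)) 0 t)) <=
            K * (Dc F x0 K * (/ 2) ^ n) * exp (gam K * t) / gam K).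
    replace ((x0 i + RInt (fun s => F i (fun j => PX F x0 (S n) j s)) 0 t) -
             (x0 i + RInt (fun s => F i (fun j => PX F x0 n j s)) 0 t))
      with (RInt (fun s => F i (fun j => PX F x0 (S n) j s) - F i (fun j => PX F x0 n j s)) 0 t).
    2: { rewrite (RInt_minus (V:=R_CompleteNormedModule)). unfold minus, plus, opp; simpl. ring.
         apply ex_RInt_cont. intros s; apply (G_cont F K); auto.
         apply ex_RInt_cont. intros s; apply (G_cont F K); auto. }
    apply RInt_bound_exp; auto. unfold gam; lra.
    intros s. apply continuity_pt_minus; apply (G_cont F K); auto.
    intros s Hs. eapply Rle_trans. apply HL. specialize (IH s ltac:(lra)).
    replace (K * (Dc F x0 K * (/2)^n) * exp (gam K * s)) with (K * (Dc F x0 K * (/2)^n * exp (gam K * s))) by ring.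
    apply Rmult_le_compat_l. lra. exact IH.
Qed.

Lemma Dc_ge0 F x0 K : 0 < K -> 0 <= Dc F x0 K.
Proof. intros HK. unfold Dc, gam. apply Rmult_le_pos. apply nrm6_ge0. apply Rlt_le, Rinv_0_lt_compat; lra. Qed.

Lemma pow_half_pos n : 0 < (/2)^n.
Proof. apply pow_lt. lra. Qed.

Lemma PX_tail F K x0 t n k : 0 < K -> Lip F K -> 0 <= t ->
  nrm6 (fun j => PX F x0 (n + k) j t - PX F x0 n j t) <=
  2 * Dc F x0 K * exp (gam K * t) * ((/2)^n - (/2)^(n+k)).
Proof.
  intros HK HL Ht. induction k as [|k IH].
  - rewrite Nat.add_0_r. unfold nrm6. repeat rewrite Rminus_eq_0. rewrite Rabs_R0. lra.
  - eapply Rle_trans. apply (nrm6_triang _ (fun j => PX F x0 (n + k) j t)).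
    rewrite Nat.add_succ_r. pose proof (PX_step F K x0 (n + k) t HK HL Ht).
    replace ((/2)^(S (n+k))) with ((/2)^(n+k) * /2) by (simpl; ring).
    lra.
Qed.

Lemma PX_diff F K x0 t n m i : 0 < K -> Lip F K -> 0 <= t -> (n <= m)%nat -> (i < 6)%nat ->
  Rabs (PX F x0 m i t - PX F x0 n i t) <= 2 * Dc F x0 K * (/2)^n * exp (gam K * t).
Proof.
  intros HK HL Ht Hnm Hi. replace m with (n + (m - n))%nat by lia.
  eapply Rle_trans. apply (nrm6_comp (fun j => PX F x0 (n + (m - n)) j t - PX F x0 n j t)). exact Hi.
  pose proof (PX_tail F K x0 t n (m - n) HK HL Ht) as T.
  eapply Rle_trans. exact T.
  pose proof (pow_half_pos (n + (m - n))). pose proof (Dc_ge0 F x0 K HK).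
  pose proof (exp_pos (gam K * t)).
  assert (0 <= 2 * Dc F x0 K * exp (gam K * t)) by (apply Rmult_le_pos; lra).
  assert (2 * Dc F x0 K * exp (gam K * t) * ((/ 2) ^ n - (/ 2) ^ (n + (m - n))) <=
          2 * Dc F x0 K * exp (gam K * t) * (/2)^n) by (apply Rmult_le_compat_l; lra).
  replace (2 * Dc F x0 K * (/ 2) ^ n * exp (gam K * t)) with (2 * Dc F x0 K * exp (gam K * t) * (/2)^n) by ring.
  exact H3.
Qed.

Lemma geo_le a b C : (forall n, a <= b + C * (/2)^n) -> a <= b.
Proof.
  intros H. destruct (Rle_lt_dec a b) as [l|l]; auto. exfalso.
  destruct (Rle_lt_dec C 0) as [c|c].
  - specialize (H 0%nat). simpl in H. lra.
  - destruct (pow_lt_1_zero (/2) ltac:(rewrite Rabs_right; lra) ((a - b) / C) ltac:(apply Rdiv_lt_0_compat; lra)) as [N HN].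
    specialize (HN N (le_n N)). rewrite Rabs_right in HN by (apply Rle_ge, Rlt_le, pow_half_pos).
    specialize (H N). apply (Rmult_lt_compat_l C) in HN; auto.
    replace (C * ((a - b) / C)) with (a - b) in HN by (field; lra). lra.
Qed.

Definition PL F x0 i t := real (Lim_seq (fun n => PX F x0 n i t)).

Lemma PL_lim F K x0 i t : 0 < K -> Lip F K -> 0 <= t -> (i < 6)%nat ->
  is_lim_seq (fun n => PX F x0 n i t) (PL F x0 i t).
Proof.
  intros HK HL Ht Hi.
  assert (Hc : ex_finite_lim_seq (fun n => PX F x0 n i t)).
  { apply ex_lim_seq_cauchy_corr. intros eps.
    set (B := 4 * Dc F x0 K * exp (gam K * t) + 1).
    assert (HB : 0 < B). { unfold B. pose proof (Dc_ge0 F x0 K HK). pose proof (exp_pos (gam K * t)). nra. }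
    destruct (pow_lt_1_zero (/2) ltac:(rewrite Rabs_right; lra) (eps / B) ltac:(apply Rdiv_lt_0_compat; [apply cond_pos|lra])) as [N HN].
    exists N. intros n m Hn Hm.
    pose proof (PX_diff F K x0 t N n i HK HL Ht Hn Hi).
    pose proof (PX_diff F K x0 t N m i HK HL Ht Hm Hi).
    specialize (HN N (le_n N)). rewrite Rabs_right in HN by (apply Rle_ge, Rlt_le, pow_half_pos).
    apply (Rmult_lt_compat_l B) in HN; auto.
    replace (B * (eps / B)) with (pos eps) in HN by (field; lra).
    unfold B in HN. pose proof (pow_half_pos N). pose proof (Dc_ge0 F x0 K HK). pose proof (exp_pos (gam K * t)).
    replace (PX F x0 n i t - PX F x0 m i t) with ((PX F x0 n i t - PX F x0 N i t) - (PX F x0 m i t - PX F x0 N i t)) by ring.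
    eapply Rle_lt_trans. apply Rabs_triang. rewrite Rabs_Ropp. nra. }
  unfold PL. destruct Hc as [l Hl]. rewrite (is_lim_seq_unique _ _ Hl). simpl. exact Hl.
Qed.

Lemma lim_abs_bound (u : nat -> R) (l c B : R) n : is_lim_seq u l -> (forall m, (n <= m)%nat -> Rabs (u m - c) <= B) ->
  Rabs (l - c) <= B.
Proof.
  intros Hl Hb. apply is_lim_seq_spec in Hl. simpl in Hl.
  destruct (Rle_lt_dec (Rabs (l - c)) B) as [h|h]; auto. exfalso.
  destruct (Hl (mkposreal (Rabs (l - c) - B) ltac:(lra))) as [N HN]. simpl in HN.
  specialize (HN (max N n) (Nat.le_max_l _ _)). specialize (Hb (max N n) (Nat.le_max_r _ _)).
  assert (Rabs (l - c) <= Rabs (l - u (max N n)) + Rabs (u (max N n) - c)).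
  { replace (l - c) with ((l - u (max N n)) + (u (max N n) - c)) by ring. apply Rabs_triang. }
  rewrite (Rabs_minus_sym l (u (max N n))) in H. lra.
Qed.

Lemma PL_bound F K x0 i t n : 0 < K -> Lip F K -> 0 <= t -> (i < 6)%nat ->
  Rabs (PL F x0 i t - PX F x0 n i t) <= 2 * Dc F x0 K * (/2)^n * exp (gam K * t).
Proof.
  intros HK HL Ht Hi. apply (lim_abs_bound _ _ _ _ n (PL_lim F K x0 i t HK HL Ht Hi)).
  intros m Hm. apply PX_diff; auto.
Qed.

Definition BL F x0 K L := nrm6 (fun i => F i x0) + K * (2 * Dc F x0 K * exp (gam K * L)).

Lemma BL_ge0 F x0 K L : 0 < K -> 0 <= BL F x0 K L.
Proof. intros HK. unfold BL. pose proof (nrm6_ge0 (fun i => F i x0)). pose proof (Dc_ge0 F x0 K HK).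
  pose proof (exp_pos (gam K * L)). assert (0 <= 2 * Dc F x0 K * exp (gam K * L)) by (apply Rmult_le_pos; lra).
  nra. Qed.

Lemma G_bound F K x0 n i r L : 0 < K -> Lip F K -> 0 <= r <= L -> (i < 6)%nat ->
  Rabs (F i (fun j => PX F x0 n j r)) <= BL F x0 K L.
Proof.
  intros HK HL Hr Hi. unfold BL.
  replace (F i (fun j => PX F x0 n j r)) with (F i x0 + (F i (fun j => PX F x0 n j r) - F i x0)) by ring.
  eapply Rle_trans. apply Rabs_triang. apply Rplus_le_compat.
  apply (nrm6_comp (fun i => F i x0)). exact Hi.
  eapply Rle_trans. apply HL. apply Rmult_le_compat_l. lra.
  pose proof (PX_tail F K x0 r 0 n HK HL ltac:(lra)). simpl in H.
  change (nrm6 (fun j => PX F x0 n j r - x0 j) <= 2 * Dc F x0 K * exp (gam K * L)).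
  eapply Rle_trans. exact H. pose proof (pow_half_pos n).
  assert (exp (gam K * r) <= exp (gam K * L)).
  { destruct (Req_dec r L). subst; lra. apply Rlt_le, exp_increasing. unfold gam. nra. }
  pose proof (Dc_ge0 F x0 K HK). pose proof (exp_pos (gam K * r)).
  assert (0 <= 2 * Dc F x0 K) by lra. 
  assert (2 * Dc F x0 K * exp (gam K * r) <= 2 * Dc F x0 K * exp (gam K * L)) by (apply Rmult_le_compat_l; lra).
  assert (0 <= 2 * Dc F x0 K * exp (gam K * r) * (/2)^n) by (apply Rmult_le_pos; [apply Rmult_le_pos|]; lra).
  lra.
Qed.

Lemma PX_lip F K x0 n i t s L : 0 < K -> Lip F K -> 0 <= t <= L -> 0 <= s <= L -> (i < 6)%nat ->
  Rabs (PX F x0 (S n) i t - PX F x0 (S n) i s) <= BL F x0 K L * Rabs (t - s).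
Proof.
  intros HK HL Ht Hs Hi. simpl.
  set (G := fun u => F i (fun j => PX F x0 n j u)).
  destruct (MVT_gen (fun u => x0 i + RInt G 0 u) s t G) as [c [Hc1 Hc2]].
  - intros x _. apply deriv_cRInt. intros u. apply (G_cont F K); auto.
  - intros x _. apply continuity_pt_plus. apply continuity_pt_const. intros a b; reflexivity.
    apply cont_RInt. intros u. apply (G_cont F K); auto.
  - simpl in Hc2. change (Rabs (x0 i + RInt G 0 t - (x0 i + RInt G 0 s)) <= BL F x0 K L * Rabs (t - s)).
    rewrite Hc2. rewrite Rabs_mult. apply Rmult_le_compat_r. apply Rabs_pos.
    apply (G_bound F K x0 n i c L); auto.
    assert (Rmin s t <= c <= Rmax s t) by exact Hc1.
    split. eapply Rle_trans; [|apply H]. apply Rmin_glb; lra.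
    eapply Rle_trans; [apply H|]. apply Rmax_lub; lra.
Qed.

Lemma PL_lip F K x0 i t s L : 0 < K -> Lip F K -> 0 <= t <= L -> 0 <= s <= L -> (i < 6)%nat ->
  Rabs (PL F x0 i t - PL F x0 i s) <= BL F x0 K L * Rabs (t - s).
Proof.
  intros HK HL Ht Hs Hi. apply (geo_le _ _ (4 * Dc F x0 K * exp (gam K * L))). intros n.
  pose proof (PX_lip F K x0 n i t s L HK HL Ht Hs Hi).
  pose proof (PL_bound F K x0 i t (S n) HK HL ltac:(lra) Hi).
  pose proof (PL_bound F K x0 i s (S n) HK HL ltac:(lra) Hi).
  assert (exp (gam K * t) <= exp (gam K * L)).
  { destruct (Req_dec t L). subst; lra. apply Rlt_le, exp_increasing. unfold gam. nra. }
  assert (exp (gam K * s) <= exp (gam K * L)).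
  { destruct (Req_dec s L). subst; lra. apply Rlt_le, exp_increasing. unfold gam. nra. }
  pose proof (Dc_ge0 F x0 K HK). pose proof (pow_half_pos n).
  replace ((/2)^(S n)) with ((/2)^n * /2) in H0, H1 by (simpl; ring).
  assert (2 * Dc F x0 K * ((/ 2) ^ n * / 2) * exp (gam K * t) <= Dc F x0 K * (/2)^n * exp (gam K * L)).
  { replace (2 * Dc F x0 K * ((/ 2) ^ n * / 2) * exp (gam K * t)) with (Dc F x0 K * (/2)^n * exp (gam K * t)) by field.
    apply Rmult_le_compat_l; auto. apply Rmult_le_pos; lra. }
  assert (2 * Dc F x0 K * ((/ 2) ^ n * / 2) * exp (gam K * s) <= Dc F x0 K * (/2)^n * exp (gam K * L)).
  { replace (2 * Dc F x0 K * ((/ 2) ^ n * / 2) * exp (gam K * s)) with (Dc F x0 K * (/2)^n * exp (gam K * s)) by field.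
    apply Rmult_le_compat_l; auto. apply Rmult_le_pos; lra. }
  replace (PL F x0 i t - PL F x0 i s) with ((PL F x0 i t - PX F x0 (S n) i t) + (PX F x0 (S n) i t - PX F x0 (S n) i s)
     - (PL F x0 i s - PX F x0 (S n) i s)) by ring.
  eapply Rle_trans. apply Rabs_triang. rewrite Rabs_Ropp.
  eapply Rle_trans. apply Rplus_le_compat_r. apply Rabs_triang.
  replace (4 * Dc F x0 K * exp (gam K * L) * (/ 2) ^ n) with (4 * (Dc F x0 K * (/ 2) ^ n * exp (gam K * L))) by ring.
  set (P := Dc F x0 K * (/ 2) ^ n * exp (gam K * L)) in *. idtac.
assert (0 <= P) by (unfold P; apply Rmult_le_pos; [apply Rmult_le_pos|apply Rlt_le, exp_pos]; lra).
clearbody P.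
set (a := Rabs (PL F x0 i t - PX F x0 (S n) i t)) in *.
set (b := Rabs (PX F x0 (S n) i t - PX F x0 (S n) i s)) in *.
set (c := Rabs (PL F x0 i s - PX F x0 (S n) i s)) in *.
clearbody a b c.
assert (a <= P) by (eapply Rle_trans; [exact H0|exact H6]).
assert (c <= P) by (eapply Rle_trans; [exact H1|exact H7]).
lra.
Qed.

Definition Pc F x0 i t := PL F x0 i (Rmax 0 t).

Lemma Rmax0_lip t s : Rabs (Rmax 0 t - Rmax 0 s) <= Rabs (t - s).
Proof.
  destruct (Rle_lt_dec 0 t); [rewrite (Rmax_right 0 t) by lra|rewrite (Rmax_left 0 t) by lra];
  (destruct (Rle_lt_dec 0 s); [rewrite (Rmax_right 0 s) by lra|rewrite (Rmax_left 0 s) by lra]);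
  unfold Rabs; repeat destruct (Rcase_abs _); lra.
Qed.

Lemma Pc_lip F K x0 i t s L : 0 < K -> Lip F K -> 0 <= L -> t <= L -> s <= L -> (i < 6)%nat ->
  Rabs (Pc F x0 i t - Pc F x0 i s) <= BL F x0 K L * Rabs (t - s).
Proof.
  intros HK HL HL0 Ht Hs Hi. unfold Pc.
  assert (A1 : 0 <= Rmax 0 t <= L) by (split; [apply Rmax_l|apply Rmax_lub; lra]).
  assert (A2 : 0 <= Rmax 0 s <= L) by (split; [apply Rmax_l|apply Rmax_lub; lra]).
  eapply Rle_trans. apply (PL_lip F K x0 i _ _ L HK HL A1 A2 Hi).
  apply Rmult_le_compat_l. apply BL_ge0; auto. apply Rmax0_lip.
Qed.

Lemma Pc_cont F K x0 i t : 0 < K -> Lip F K -> (i < 6)%nat -> continuity_pt (Pc F x0 i) t.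
Proof.
  intros HK HL Hi. apply cont_of_delta. intros eps He.
  set (L := Rabs t + 1). set (B := BL F x0 K L).
  assert (HB : 0 <= B) by (apply BL_ge0; auto).
  exists (Rmin 1 (eps / (B + 1))). split. apply Rmin_pos. lra. apply Rdiv_lt_0_compat; lra.
  intros y Hy. pose proof (Rmin_l 1 (eps / (B + 1))). pose proof (Rmin_r 1 (eps / (B + 1))).
  assert (Hyt : Rabs (y - t) < 1) by lra.
  pose proof (Rle_abs t). apply Rabs_def2 in Hyt.
  eapply Rle_lt_trans. apply (Pc_lip F K x0 i y t L); auto; unfold L; pose proof (Rabs_pos t); lra.
  fold B. assert (HH : Rabs (y - t) < eps / (B + 1)) by lra.
  apply Rle_lt_trans with ((B + 1) * Rabs (y - t)). pose proof (Rabs_pos (y - t)). nra.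
  apply (Rmult_lt_compat_l (B + 1)) in HH; [|lra]. replace ((B + 1) * (eps / (B + 1))) with eps in HH by (field; lra). exact HH.
Qed.

Lemma Gc_cont F K x0 i s : 0 < K -> Lip F K -> continuity_pt (fun u => F i (fun j => Pc F x0 j u)) s.
Proof. intros HK HL. apply (cont_compF F K); auto. intros j Hj. apply (Pc_cont F K); auto. Qed.

Lemma Pc_int F K x0 i t : 0 < K -> Lip F K -> 0 <= t -> (i < 6)%nat ->
  Pc F x0 i t = x0 i + RInt (fun s => F i (fun j => Pc F x0 j s)) 0 t.
Proof.
  intros HK HL Ht Hi.
  set (Gc := fun s => F i (fun j => Pc F x0 j s)).
  assert (Hle : Rabs (Pc F x0 i t - (x0 i + RInt Gc 0 t)) <= 0).
  2: { pose proof (Rabs_pos (Pc F x0 i t - (x0 i + RInt Gc 0 t))).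
       assert (Rabs (Pc F x0 i t - (x0 i + RInt Gc 0 t)) = 0) by lra.
       apply Rabs_eq_0 in H0. lra. }
  apply (geo_le _ _ (2 * Dc F x0 K * exp (gam K * t))). intros n.
  set (Gn := fun s => F i (fun j => PX F x0 n j s)).
  assert (HX : PX F x0 (S n) i t = x0 i + RInt Gn 0 t) by reflexivity.
  assert (HPc : Pc F x0 i t = PL F x0 i t) by (unfold Pc; rewrite Rmax_right; auto).
  pose proof (PL_bound F K x0 i t (S n) HK HL Ht Hi) as B1.
  assert (B2 : Rabs (RInt Gn 0 t - RInt Gc 0 t) <= Dc F x0 K * (/2)^n * exp (gam K * t)).
  { assert (E : RInt Gn 0 t - RInt Gc 0 t = RInt (fun s => Gn s - Gc s) 0 t).
    { rewrite (RInt_minus (V:=R_CompleteNormedModule)). unfold minus, plus, opp; simpl. ring.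
      apply ex_RInt_cont. intros s; apply (G_cont F K); auto.
      apply ex_RInt_cont. intros s; apply (Gc_cont F K); auto. }
    rewrite E.
    replace (Dc F x0 K * (/2)^n * exp (gam K * t)) with ((12 * K * Dc F x0 K * (/2)^n) * exp (gam K * t) / gam K)
      by (unfold gam; field; lra).
    apply RInt_bound_exp; auto. unfold gam; lra.
    intros s. apply continuity_pt_minus. apply (G_cont F K); auto. apply (Gc_cont F K); auto.
    intros s Hs. unfold Gn, Gc. eapply Rle_trans. apply HL.
    replace (12 * K * Dc F x0 K * (/ 2) ^ n * exp (gam K * s)) with (K * (6 * (2 * Dc F x0 K * (/ 2) ^ n * exp (gam K * s)))) by ring.
    apply Rmult_le_compat_l. lra. apply nrm6_bound. intros j Hj.
    unfold Pc. rewrite Rmax_right by lra. rewrite Rabs_minus_sym. apply PL_bound; auto. lra. }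
  rewrite HPc. 
  replace (PL F x0 i t - (x0 i + RInt Gc 0 t)) with ((PL F x0 i t - PX F x0 (S n) i t) + (RInt Gn 0 t - RInt Gc 0 t))
    by (rewrite HX; ring).
  eapply Rle_trans. apply Rabs_triang.
  replace ((/2)^(S n)) with ((/2)^n * /2) in B1 by (simpl; ring).
  replace (0 + 2 * Dc F x0 K * exp (gam K * t) * (/ 2) ^ n) with
     (2 * Dc F x0 K * ((/ 2) ^ n * / 2) * exp (gam K * t) + Dc F x0 K * (/ 2) ^ n * exp (gam K * t)) by field.
  apply Rplus_le_compat; assumption.
Qed.

Lemma Pc_deriv F K x0 i t : 0 < K -> Lip F K -> 0 < t -> (i < 6)%nat ->
  is_derive (Pc F x0 i) t (F i (fun j => Pc F x0 j t)).
Proof.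
  intros HK HL Ht Hi.
  apply is_derive_ext_loc with (f := fun u => x0 i + RInt (fun s => F i (fun j => Pc F x0 j s)) 0 u).
  - apply locally_R. exists t. split; auto. intros y Hy. apply Rabs_def2 in Hy.
    symmetry. apply (Pc_int F K); auto. lra.
  - apply deriv_cRInt. intros s. apply (Gc_cont F K); auto.
Qed.

Lemma picard F K x0 : 0 < K -> Lip F K ->
  exists Y : nat -> R -> R,
    (forall i, (i < 6)%nat -> Y i 0 = x0 i) /\
    (forall i t, (i < 6)%nat -> continuity_pt (Y i) t) /\
    (forall i t, (i < 6)%nat -> 0 < t -> is_derive (Y i) t (F i (fun j => Y j t))).
Proof.
  intros HK HL. exists (Pc F x0). split; [|split].
  - intros i Hi. rewrite (Pc_int F K x0 i 0 HK HL (Rle_refl 0) Hi). rewrite RInt_point.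
    unfold zero; simpl. ring.
  - intros i t Hi. apply (Pc_cont F K); auto.
  - intros i t Hi Ht. apply (Pc_deriv F K); auto.
Qed.

Definition kE p := gamma p + mu p.
Definition kI p := delta p + tau p + mu p.
Definition kT p := alpha p + omega p + mu p.
Definition kR p := eta p + mu p.
Definition S0 p := sS (E0 p).
Definition V0 p := sV (E0 p).

Lemma S0_pos p : params_pos p -> 0 < S0 p.
Proof. intros (HL&Hb&Hg&Hm&Hp&He&Ht&Hd&Hta&Ha&Ho). unfold S0, E0; simpl.
  apply Rdiv_lt_0_compat; nra. Qed.

Lemma eq_S p : params_pos p -> Lam p + theta p * V0 p - (pi_ p + mu p) * S0 p = 0.
Proof. intros (HL&Hb&Hg&Hm&Hp&He&Ht&Hd&Hta&Ha&Ho). unfold S0, V0, E0; simpl. field. nra. Qed.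

Lemma eq_V p : params_pos p -> pi_ p * S0 p - (theta p + mu p) * V0 p = 0.
Proof. intros (HL&Hb&Hg&Hm&Hp&He&Ht&Hd&Hta&Ha&Ho). unfold S0, V0, E0; simpl. field. nra. Qed.

Lemma Rv_eq p : params_pos p -> Rv p = gamma p * beta p * S0 p / (kE p * kI p).
Proof. intros (HL&Hb&Hg&Hm&Hp&He&Ht&Hd&Hta&Ha&Ho). unfold Rv, S0, kE, kI, E0; simpl. field.
  repeat split; nra. Qed.

Lemma fS_dev p z : params_pos p -> fS p z = eta p * sR z + theta p * (sV z - V0 p) - (pi_ p + mu p) * (sS z - S0 p)
   - beta p * S0 p * sI z - beta p * (sS z - S0 p) * sI z.
Proof. intros H. pose proof (eq_S p H). unfold fS. nra. Qed.

Lemma fV_dev p z : params_pos p -> fV p z = pi_ p * (sS z - S0 p) - (theta p + mu p) * (sV z - V0 p).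
Proof. intros H. pose proof (eq_V p H). unfold fV. nra. Qed.

Lemma fE_dev p z : fE p z = beta p * S0 p * sI z + beta p * (sS z - S0 p) * sI z - kE p * sE z.
Proof. unfold fE, kE. ring. Qed.

Definition sq6 (x y : state) : R :=
  (sS x - sS y)^2 + (sV x - sV y)^2 + (sE x - sE y)^2 + (sI x - sI y)^2 + (sT x - sT y)^2 + (sR x - sR y)^2.

Lemma sq6_ge0 x y : 0 <= sq6 x y.
Proof. unfold sq6. repeat apply Rplus_le_le_0_compat; apply pow2_ge_0. Qed.

Lemma dist_lt x y e : 0 < e -> (dist6 x y < e <-> sq6 x y < e^2).
Proof.
  intros He. unfold dist6. fold (sq6 x y). pose proof (sq6_ge0 x y). split; intros H1.
  - pose proof (sqrt_pos (sq6 x y)). rewrite <- (pow2_sqrt (sq6 x y)) by lra. nra.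
  - rewrite <- (sqrt_pow2 e) by lra. apply sqrt_lt_1_alt. lra.
Qed.

Lemma dist_le x y e : 0 <= e -> (dist6 x y <= e <-> sq6 x y <= e^2).
Proof.
  intros He. unfold dist6. fold (sq6 x y). pose proof (sq6_ge0 x y). split; intros H1.
  - pose proof (sqrt_pos (sq6 x y)). rewrite <- (pow2_sqrt (sq6 x y)) by lra. nra.
  - rewrite <- (sqrt_pow2 e) by lra. apply sqrt_le_1_alt. lra.
Qed.

Lemma Rbar_lt_le t T (b : Rbar) : Rbar_lt (Finite T) b -> t <= T -> Rbar_lt (Finite t) b.
Proof. destruct b; simpl; auto; lra. Qed.

Definition Qw (w : nat -> R) (c : state) (z : state) : R :=
  w 0%nat * ((sS z - sS c) * (sS z - sS c)) + w 1%nat * ((sV z - sV c) * (sV z - sV c)) +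
  w 2%nat * ((sE z - sE c) * (sE z - sE c)) + w 3%nat * ((sI z - sI c) * (sI z - sI c)) +
  w 4%nat * ((sT z - sT c) * (sT z - sT c)) + w 5%nat * ((sR z - sR c) * (sR z - sR c)).

Definition Qdot p (w : nat -> R) (c : state) (z : state) : R :=
  2 * (w 0%nat * (sS z - sS c) * fS p z + w 1%nat * (sV z - sV c) * fV p z +
       w 2%nat * (sE z - sE c) * fE p z + w 3%nat * (sI z - sI c) * fI p z +
       w 4%nat * (sT z - sT c) * fT p z + w 5%nat * (sR z - sR c) * fR p z).

Lemma quad_deriv (g0 g1 g2 g3 g4 g5 : R -> R) (d0 d1 d2 d3 d4 d5 w0 w1 w2 w3 w4 w5 c0 c1 c2 c3 c4 c5 t : R) :
  is_derive g0 t d0 -> is_derive g1 t d1 -> is_derive g2 t d2 -> is_derive g3 t d3 ->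
  is_derive g4 t d4 -> is_derive g5 t d5 ->
  is_derive (fun u => w0 * ((g0 u - c0) * (g0 u - c0)) + w1 * ((g1 u - c1) * (g1 u - c1)) +
     w2 * ((g2 u - c2) * (g2 u - c2)) + w3 * ((g3 u - c3) * (g3 u - c3)) +
     w4 * ((g4 u - c4) * (g4 u - c4)) + w5 * ((g5 u - c5) * (g5 u - c5))) t
   (2 * (w0 * (g0 t - c0) * d0 + w1 * (g1 t - c1) * d1 + w2 * (g2 t - c2) * d2 +
         w3 * (g3 t - c3) * d3 + w4 * (g4 t - c4) * d4 + w5 * (g5 t - c5) * d5)).
Proof.
  intros D0 D1 D2 D3 D4 D5. auto_derive.
  - repeat split; eexists; eauto.
  - change (fun x => g0 x) with g0. change (fun x => g1 x) with g1. change (fun x => g2 x) with g2.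
    change (fun x => g3 x) with g3. change (fun x => g4 x) with g4. change (fun x => g5 x) with g5.
    rewrite (is_derive_unique _ _ _ D0), (is_derive_unique _ _ _ D1), (is_derive_unique _ _ _ D2),
      (is_derive_unique _ _ _ D3), (is_derive_unique _ _ _ D4), (is_derive_unique _ _ _ D5). ring.
Qed.

Lemma Qw_deriv p b x w c t : is_solution p b x -> 0 < t -> Rbar_lt (Finite t) b ->
  is_derive (fun u => Qw w c (x u)) t (Qdot p w c (x t)).
Proof.
  intros [_ [Hd _]] Ht Htb. destruct (Hd t Ht Htb) as (D0&D1&D2&D3&D4&D5).
  unfold Qw, Qdot. exact (quad_deriv _ _ _ _ _ _ _ _ _ _ _ _ _ _ _ _ _ _ _ _ _ _ _ _ _ D0 D1 D2 D3 D4 D5).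
Qed.

Lemma comp_rc p b x : is_solution p b x ->
  rc (fun u => sS (x u)) /\ rc (fun u => sV (x u)) /\ rc (fun u => sE (x u)) /\
  rc (fun u => sI (x u)) /\ rc (fun u => sT (x u)) /\ rc (fun u => sR (x u)).
Proof.
  intros (_&_&H0&H1&H2&H3&H4&H5). repeat split; apply rc_of_filterlim; assumption.
Qed.

Ltac cont_tac := repeat first [apply continuity_pt_plus | apply continuity_pt_minus | apply continuity_pt_mult |
  apply continuity_pt_const; intros ? ?; reflexivity | assumption].

Lemma Qw_rc p b x w c : is_solution p b x -> rc (fun u => Qw w c (x u)).
Proof.
  intros H. destruct (comp_rc p b x H) as (H0&H1&H2&H3&H4&H5). unfold rc, Qw in *. cont_tac.
Qed.

Lemma young c u w eps : 0 < eps -> c * u * w <= eps * u^2 + c^2 / (4 * eps) * w^2.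
Proof.
  intros He. assert (eps * u^2 + c^2 / (4 * eps) * w^2 - c * u * w = eps * (u - c * w / (2 * eps))^2)
    by (field; lra).
  assert (0 <= eps * (u - c * w / (2 * eps))^2) by (apply Rmult_le_pos; [lra|apply pow2_ge_0]). lra.
Qed.

Lemma quad_nonneg k A0 C0 Bq e i : 0 < k -> 0 < A0 -> 0 < C0 -> Bq^2 <= k^2 * A0 * C0 ->
  0 <= k * A0 * e^2 - 2 * Bq * e * i + k * C0 * i^2.
Proof.
  intros Hk HA HC HB.
  assert (k * A0 * (k * A0 * e^2 - 2 * Bq * e * i + k * C0 * i^2) = (k * A0 * e - Bq * i)^2 + (k^2 * A0 * C0 - Bq^2) * i^2) by ring.
  assert (0 <= (k * A0 * e - Bq * i)^2 + (k^2 * A0 * C0 - Bq^2) * i^2).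
  { apply Rplus_le_le_0_compat. apply pow2_ge_0. apply Rmult_le_pos. lra. apply pow2_ge_0. }
  assert (0 < k * A0) by nra.
  destruct (Rle_lt_dec 0 (k * A0 * e^2 - 2 * Bq * e * i + k * C0 * i^2)); auto. nra.
Qed.

Lemma stab_core (pi0 th mu et be s0 ga ke ki de kt al kr qx qv qe qi Y1 Y2 A B C r0 x v e i T R : R) :
  0 < pi0 -> 0 < th -> 0 < mu -> 0 < be -> 0 < ga -> 0 < kt -> 0 < kr -> 0 < qx -> 0 < A -> 0 < B -> 0 < C ->
  0 <= Y2 ->
  pi0 * (pi0 + mu) * x^2 - 2 * pi0 * th * x * v + th * (th + mu) * v^2 >= qx * x^2 + qv * v^2 ->
  ga * ke * e^2 - 2 * ga * be * s0 * e * i + be * s0 * ki * i^2 >= qe * e^2 + qi * i^2 ->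
  Y1 = (pi0 * et)^2 / qx -> Y2 = (pi0 * be * s0)^2 / qx ->
  C * kr = 2 * (Y1 + 1) -> B * kt = 2 * (C * al^2 / kr) + 1 ->
  A * qi = 8 * (Y2 + B * de^2 / kt / 2 + 1) ->
  pi0 * be * r0 <= qx / 4 -> ga * be * r0 <= qe -> ga * be * r0 <= qi / 2 ->
  Rabs x <= r0 -> Rabs i <= r0 ->
  pi0 * x * (et * R + th * v - (pi0 + mu) * x - be * s0 * i - be * x * i) + th * v * (pi0 * x - (th + mu) * v)
  + A * ga * e * (be * s0 * i + be * x * i - ke * e) + A * be * s0 * i * (ga * e - ki * i)
  + B * T * (de * i - kt * T) + C * R * (al * T - kr * R)
  <= - (qx / 4) * x^2 - qv * v^2 - (A * qe / 2) * e^2 - i^2 - (1/2) * T^2 - R^2.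
Proof.
  intros Hpi Hth Hmu Hbe Hga Hkt Hkr Hqx HA HB HC HY2p HSV HEI HY1 HY2 HCr HBr HAr Hr1 Hr2 Hr3 Hx Hi.
  assert (F3 : (pi0 * et) * x * R <= qx / 4 * x^2 + Y1 * R^2).
  { rewrite HY1. replace ((pi0 * et)^2 / qx) with ((pi0 * et)^2 / (4 * (qx/4))) by (field; lra).
    apply young. lra. }
  assert (F4 : (- (pi0 * be * s0)) * x * i <= qx / 4 * x^2 + Y2 * i^2).
  { rewrite HY2. replace ((pi0 * be * s0)^2 / qx) with ((- (pi0 * be * s0))^2 / (4 * (qx/4))) by (field; lra).
    apply young. lra. }
  assert (F5 : - (pi0 * be) * x^2 * i <= qx / 4 * x^2).
  { assert (- i <= r0) by (pose proof (Rle_abs (- i)); rewrite Rabs_Ropp in H; lra).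
    assert (0 <= x^2) by apply pow2_ge_0.
    assert (- (pi0 * be) * x^2 * i = (pi0 * be) * (x^2 * (- i))) by ring. rewrite H1.
    assert (x^2 * (- i) <= x^2 * r0) by (apply Rmult_le_compat_l; lra).
    assert (0 < pi0 * be) by nra. 
    apply Rle_trans with (pi0 * be * (x^2 * r0)). apply Rmult_le_compat_l; lra.
    replace (pi0 * be * (x^2 * r0)) with ((pi0 * be * r0) * x^2) by ring. apply Rmult_le_compat_r; lra. }
  assert (F6 : A * ga * be * x * e * i <= (A * qe / 2) * e^2 + (A * qi / 4) * i^2).
  { assert (x * e * i <= r0 * (e^2 + i^2) / 2).
    { apply Rle_trans with (Rabs (x * e * i)). apply Rle_abs.
      rewrite !Rabs_mult. assert (2 * Rabs e * Rabs i <= e^2 + i^2).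
      { rewrite <- (pow2_abs e), <- (pow2_abs i).
        pose proof (pow2_ge_0 (Rabs e - Rabs i)). nra. }
      pose proof (Rabs_pos e). pose proof (Rabs_pos i). pose proof (Rabs_pos x).
      assert (Rabs x * Rabs e * Rabs i <= r0 * (Rabs e * Rabs i)).
      { replace (Rabs x * Rabs e * Rabs i) with (Rabs x * (Rabs e * Rabs i)) by ring.
        apply Rmult_le_compat_r. apply Rmult_le_pos; lra. lra. }
      assert (0 <= r0) by (pose proof (Rabs_pos x); lra). nra. }
    assert (0 < A * ga * be) by (apply Rmult_lt_0_compat; [apply Rmult_lt_0_compat|]; lra).
    replace (A * ga * be * x * e * i) with ((A * ga * be) * (x * e * i)) by ring.
    apply Rle_trans with ((A * ga * be) * (r0 * (e^2 + i^2) / 2)). apply Rmult_le_compat_l; lra.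
    assert (0 <= e^2) by apply pow2_ge_0. assert (0 <= i^2) by apply pow2_ge_0.
    assert (A * (ga * be * r0) * e^2 <= A * qe * e^2). { apply Rmult_le_compat_r. lra. apply Rmult_le_compat_l; lra. }
    assert (A * (ga * be * r0) * i^2 <= A * (qi / 2) * i^2). { apply Rmult_le_compat_r. lra. apply Rmult_le_compat_l; lra. }
    lra. }
  assert (F7 : (B * de) * T * i <= (B * kt / 2) * T^2 + (B * de^2 / kt / 2) * i^2).
  { replace (B * de^2 / kt / 2) with ((B * de)^2 / (4 * (B * kt / 2))) by (field; lra). apply young.
    apply Rmult_lt_0_compat. nra. lra. }
  assert (F8 : (C * al) * R * T <= (C * kr / 2) * R^2 + (C * al^2 / kr / 2) * T^2).
  { replace (C * al^2 / kr / 2) with ((C * al)^2 / (4 * (C * kr / 2))) by (field; lra). apply young.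
    apply Rmult_lt_0_compat. nra. lra. }
  assert (F2 : A * (ga * ke * e^2 - 2 * ga * be * s0 * e * i + be * s0 * ki * i^2) >= A * (qe * e^2 + qi * i^2)).
  { apply Rle_ge, Rmult_le_compat_l; lra. }
  assert (HBr' : B * kt * T^2 = (2 * (C * al^2 / kr) + 1) * T^2) by (rewrite HBr; reflexivity).
  assert (HCr' : C * kr * R^2 = 2 * (Y1 + 1) * R^2) by (rewrite HCr; reflexivity).
  assert (HAr' : A * qi * i^2 = 8 * (Y2 + B * de^2 / kt / 2 + 1) * i^2) by (rewrite HAr; reflexivity).
  assert (P1 : 0 <= Y2 * i^2) by (apply Rmult_le_pos; [lra|apply pow2_ge_0]).
  assert (P2 : 0 <= B * de^2 / kt / 2 * i^2).
  { apply Rmult_le_pos; [|apply pow2_ge_0]. apply Rmult_le_pos; [|lra]. apply Rmult_le_pos.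
    apply Rmult_le_pos; [lra|apply pow2_ge_0]. apply Rlt_le, Rinv_0_lt_compat; lra. }
  assert (P3 : 0 <= C * al^2 / kr / 2 * T^2).
  { apply Rmult_le_pos; [|apply pow2_ge_0]. apply Rmult_le_pos; [|lra]. apply Rmult_le_pos.
    apply Rmult_le_pos; [lra|apply pow2_ge_0]. apply Rlt_le, Rinv_0_lt_compat; lra. }
  assert (Hsum : pi0 * x * (et * R + th * v - (pi0 + mu) * x - be * s0 * i - be * x * i) + th * v * (pi0 * x - (th + mu) * v)
  + A * ga * e * (be * s0 * i + be * x * i - ke * e) + A * be * s0 * i * (ga * e - ki * i)
  + B * T * (de * i - kt * T) + C * R * (al * T - kr * R) <=
  -(qx * x^2 + qv * v^2) - A * (qe * e^2 + qi * i^2) + (qx / 4 * x^2 + Y1 * R^2) + (qx / 4 * x^2 + Y2 * i^2)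
  + qx / 4 * x^2 + ((A * qe / 2) * e^2 + (A * qi / 4) * i^2) + ((B * kt / 2) * T^2 + (B * de^2 / kt / 2) * i^2)
  - B * kt * T^2 + ((C * kr / 2) * R^2 + (C * al^2 / kr / 2) * T^2) - C * kr * R^2).
  { lra. }
  pose proof (pow2_ge_0 i). pose proof (pow2_ge_0 T). pose proof (pow2_ge_0 R).
  assert (Ci : - A * qi * i^2 + Y2 * i^2 + (A * qi / 4) * i^2 + (B * de^2 / kt / 2) * i^2 <= - i^2) by lra.
  assert (CT : (B * kt / 2) * T^2 - B * kt * T^2 + (C * al^2 / kr / 2) * T^2 <= -(1/2) * T^2) by lra.
  assert (CR : Y1 * R^2 + (C * kr / 2) * R^2 - C * kr * R^2 <= - R^2) by lra.
  lra.
Qed.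

Lemma cont_max0 t : continuity_pt (fun u => Rmax 0 u) t.
Proof. apply cont_of_delta. intros eps He. exists eps. split; auto. intros y Hy.
  eapply Rle_lt_trans. apply Rmax0_lip. exact Hy. Qed.

Lemma rc_mult_exp L c : rc L -> rc (fun u => L u * exp (c * u)).
Proof.
  unfold rc. intros H. apply continuity_pt_mult. exact H.
  apply continuity_pt_comp with (f1 := fun u => c * Rmax 0 u) (f2 := exp).
  apply continuity_pt_mult. apply continuity_pt_const. intros a b; reflexivity. apply cont_max0.
  apply derivable_continuous_pt. apply derivable_pt_exp.
Qed.

Lemma deriv_mult_exp (L : R -> R) Ld c t : is_derive L t Ld ->
  is_derive (fun u => L u * exp (c * u)) t (Ld * exp (c * t) + L t * (c * exp (c * t))).
Proof.
  intros H. auto_derive. eexists; eauto.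
  change (fun x => L x) with L. rewrite (is_derive_unique _ _ _ H). ring.
Qed.

Lemma decay (L Ld : R -> R) (b : Rbar) K c : 0 < c -> 0 < K -> L 0 < K -> rc L ->
  (forall t, 0 < t -> Rbar_lt (Finite t) b -> is_derive L t (Ld t)) ->
  (forall t, 0 < t -> Rbar_lt (Finite t) b -> L t < K -> Ld t <= - c * L t) ->
  forall t, 0 <= t -> Rbar_lt (Finite t) b -> L t < K /\ L t * exp (c * t) <= L 0.
Proof.
  intros Hc HK H0 Hrc Hd Hdec.
  set (phi := fun u => L u * exp (c * u)).
  assert (Hmono : forall T, 0 < T -> Rbar_lt (Finite T) b -> (forall s, 0 < s < T -> L s < K) -> phi T <= phi 0).
  { intros T HT HTb Hlt.
    apply (mono_le phi (fun u => Ld u * exp (c * u) + L u * (c * exp (c * u))) T HT).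
    - intros s Hs. apply deriv_mult_exp. apply Hd. lra. apply (Rbar_lt_le s T); auto; lra.
    - intros s Hs. assert (Ld s <= - c * L s). { apply Hdec. lra. apply (Rbar_lt_le s T); auto; lra. apply Hlt; lra. }
      pose proof (exp_pos (c * s)). nra.
    - apply rc_mult_exp. exact Hrc.
    - eapply deriv_cont. apply deriv_mult_exp. apply Hd; auto. }
  assert (Hphi0 : phi 0 = L 0) by (unfold phi; rewrite Rmult_0_r, exp_0; ring).
  assert (Hall : forall t, 0 <= t -> Rbar_lt (Finite t) b -> L t < K).
  { intros t1 Ht1 Ht1b. destruct (Rlt_le_dec (L t1) K) as [l|l]; auto. exfalso.
    destruct (first_exit L K t1 Ht1 H0 l Hrc) as [tau [Htau [HKt Hbel]]].
    { intros s Hs. eapply deriv_cont. apply Hd. lra. apply (Rbar_lt_le s t1); auto; lra. }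
    assert (phi tau <= phi 0). { apply Hmono. lra. apply (Rbar_lt_le tau t1); auto; lra. intros s Hs. apply Hbel. lra. }
    rewrite Hphi0 in H. unfold phi in H. assert (1 <= exp (c * tau)). { pose proof (exp_ineq1_le (c * tau)). nra. }
    nra. }
  intros t Ht Htb. split. apply Hall; auto.
  destruct (Req_dec t 0). { subst. rewrite Rmult_0_r, exp_0. lra. }
  fold (phi t). rewrite <- Hphi0. apply Hmono. lra. exact Htb. intros s Hs. apply Hall. lra.
  apply (Rbar_lt_le s t); auto; lra.
Qed.

Lemma deriv_opp (W : R -> R) t d : is_derive W t d -> is_derive (fun u => - W u) t (- d).
Proof. intros H. auto_derive. eexists; eauto. change (fun x => W x) with W. rewrite (is_derive_unique _ _ _ H). ring. Qed.

Lemma growth (W Wd : R -> R) c : 0 < c -> rc W ->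
  (forall t, 0 < t -> is_derive W t (Wd t)) ->
  (forall t, 0 < t -> c * W t <= Wd t) ->
  forall t, 0 <= t -> W 0 <= W t * exp (- c * t).
Proof.
  intros Hc Hrc Hd Hg t Ht.
  destruct (Req_dec t 0). { subst. rewrite Rmult_0_r, exp_0. lra. }
  set (phi := fun u => - W u * exp (- c * u)).
  assert (phi t <= phi 0).
  { apply (mono_le phi (fun u => - Wd u * exp (- c * u) + - W u * (- c * exp (- c * u))) t). lra.
    - intros s Hs. unfold phi. apply (deriv_mult_exp (fun u => - W u)).
      apply deriv_opp. apply Hd. lra.
    - intros s Hs. pose proof (Hg s ltac:(lra)). pose proof (exp_pos (- c * s)). nra.
    - apply rc_mult_exp. unfold rc in *. apply continuity_pt_opp. exact Hrc.
    - eapply deriv_cont. apply (deriv_mult_exp (fun u => - W u)).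
      apply deriv_opp. apply Hd. lra. }
  unfold phi in H0. rewrite Rmult_0_r, exp_0 in H0. lra.
Qed.

Definition rho p := gamma p * beta p * S0 p / (kE p * kI p).
Definition qe p := (1 - rho p) / 2 * (gamma p * kE p).
Definition qi p := (1 - rho p) / 2 * (beta p * S0 p * kI p).
Definition qx p := pi_ p * mu p * (pi_ p + mu p) / (theta p + mu p).
Definition qv p := theta p * mu p * (theta p + mu p) / (pi_ p + mu p).
Definition Y1 p := (pi_ p * eta p)^2 / qx p.
Definition Y2 p := (pi_ p * beta p * S0 p)^2 / qx p.
Definition Cw p := 2 * (Y1 p + 1) / kR p.
Definition Bw p := (2 * (Cw p * alpha p ^2 / kR p) + 1) / kT p.
Definition Aw p := 8 * (Y2 p + Bw p * delta p ^2 / kT p / 2 + 1) / qi p.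
Definition r0 p := Rmin (qx p / (4 * (pi_ p * beta p))) (Rmin (qe p / (gamma p * beta p)) (qi p / (2 * (gamma p * beta p)))).
Definition nu p := Rmin (qx p / 4) (Rmin (qv p) (Rmin (Aw p * qe p / 2) (1/2))).
Definition wts p : nat -> R := fun k => match k with
  | 0%nat => pi_ p | 1%nat => theta p | 2%nat => Aw p * gamma p | 3%nat => Aw p * beta p * S0 p
  | 4%nat => Bw p | _ => Cw p end.
Definition mw p := Rmin (pi_ p) (Rmin (theta p) (Rmin (Aw p * gamma p) (Rmin (Aw p * beta p * S0 p) (Rmin (Bw p) (Cw p))))).
Definition Mw p := pi_ p + theta p + Aw p * gamma p + Aw p * beta p * S0 p + Bw p + Cw p.

Record spos p : Prop := {
  sp_qe : 0 < qe p; sp_qi : 0 < qi p; sp_qx : 0 < qx p; sp_qv : 0 < qv p;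
  sp_Y1 : 0 <= Y1 p; sp_Y2 : 0 <= Y2 p; sp_C : 0 < Cw p; sp_B : 0 < Bw p; sp_A : 0 < Aw p;
  sp_r0 : 0 < r0 p; sp_nu : 0 < nu p; sp_mw : 0 < mw p; sp_mM : mw p <= Mw p }.

Lemma rho_lt p : params_pos p -> Rv p < 1 -> rho p < 1.
Proof. intros H H1. unfold rho. rewrite <- Rv_eq; auto. Qed.

Lemma spos_ok p : params_pos p -> Rv p < 1 -> spos p.
Proof.
  intros H H1. pose proof (rho_lt p H H1) as Hr. pose proof (S0_pos p H) as HS.
  destruct H as (HL&Hb&Hg&Hm&Hp&He&Ht&Hd&Hta&Ha&Ho).
  assert (Hke : 0 < kE p) by (unfold kE; lra). assert (Hki : 0 < kI p) by (unfold kI; lra).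
  assert (Hkt : 0 < kT p) by (unfold kT; lra). assert (Hkr : 0 < kR p) by (unfold kR; lra).
  assert (qe0 : 0 < qe p) by (unfold qe; apply Rmult_lt_0_compat; [lra|nra]).
  assert (qi0 : 0 < qi p) by (unfold qi; apply Rmult_lt_0_compat; [lra|]; apply Rmult_lt_0_compat; nra).
  assert (qx0 : 0 < qx p). { unfold qx. apply Rdiv_lt_0_compat. apply Rmult_lt_0_compat. apply Rmult_lt_0_compat; lra. lra. lra. }
  assert (qv0 : 0 < qv p). { unfold qv. apply Rdiv_lt_0_compat. apply Rmult_lt_0_compat. apply Rmult_lt_0_compat; lra. lra. lra. }
  assert (Y10 : 0 <= Y1 p) by (unfold Y1; apply Rmult_le_pos; [apply pow2_ge_0|apply Rlt_le, Rinv_0_lt_compat; lra]).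
  assert (Y20 : 0 <= Y2 p) by (unfold Y2; apply Rmult_le_pos; [apply pow2_ge_0|apply Rlt_le, Rinv_0_lt_compat; lra]).
  assert (C0 : 0 < Cw p) by (unfold Cw; apply Rdiv_lt_0_compat; lra).
  assert (B0 : 0 < Bw p).
  { unfold Bw. apply Rdiv_lt_0_compat; [|lra]. assert (0 <= Cw p * alpha p ^ 2 / kR p).
    apply Rmult_le_pos. apply Rmult_le_pos. lra. apply pow2_ge_0. apply Rlt_le, Rinv_0_lt_compat; lra. lra. }
  assert (A0 : 0 < Aw p).
  { unfold Aw. apply Rdiv_lt_0_compat; [|lra]. assert (0 <= Bw p * delta p ^ 2 / kT p / 2).
    apply Rmult_le_pos; [|lra]. apply Rmult_le_pos. apply Rmult_le_pos. lra. apply pow2_ge_0. apply Rlt_le, Rinv_0_lt_compat; lra. lra. }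
  assert (r00 : 0 < r0 p).
  { unfold r0. repeat apply Rmin_pos; apply Rdiv_lt_0_compat; nra. }
  assert (nu0 : 0 < nu p) by (unfold nu; repeat apply Rmin_pos; nra).
  assert (0 < Aw p * gamma p) by nra. assert (0 < Aw p * beta p * S0 p) by (apply Rmult_lt_0_compat; nra).
  assert (mw0 : 0 < mw p) by (unfold mw; repeat apply Rmin_pos; lra).
  constructor; auto.
  unfold mw, Mw. pose proof (Rmin_l (pi_ p) (Rmin (theta p) (Rmin (Aw p * gamma p) (Rmin (Aw p * beta p * S0 p) (Rmin (Bw p) (Cw p)))))).
  assert (0 < Aw p * gamma p) by nra. assert (0 < Aw p * beta p * S0 p) by (apply Rmult_lt_0_compat; nra). lra.
Qed.

Lemma Qw_bounds w c z m M : 0 <= m -> (forall k, (k < 6)%nat -> m <= w k <= M) ->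
  m * sq6 z c <= Qw w c z <= M * sq6 z c.
Proof.
  intros Hm Hw. unfold Qw, sq6.
  pose proof (Hw 0%nat ltac:(lia)). pose proof (Hw 1%nat ltac:(lia)). pose proof (Hw 2%nat ltac:(lia)).
  pose proof (Hw 3%nat ltac:(lia)). pose proof (Hw 4%nat ltac:(lia)). pose proof (Hw 5%nat ltac:(lia)).
  assert (forall a ww, m <= ww <= M -> m * a^2 <= ww * (a * a) <= M * a^2).
  { intros a ww Hww. pose proof (pow2_ge_0 a). replace (a * a) with (a^2) by ring. split; apply Rmult_le_compat_r; lra. }
  pose proof (H5 (sS z - sS c) _ H). pose proof (H5 (sV z - sV c) _ H0). pose proof (H5 (sE z - sE c) _ H1).
  pose proof (H5 (sI z - sI c) _ H2). pose proof (H5 (sT z - sT c) _ H3). pose proof (H5 (sR z - sR c) _ H4).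
  split; lra.
Qed.

Lemma wts_bounds p : params_pos p -> Rv p < 1 -> forall k, (k < 6)%nat -> mw p <= wts p k <= Mw p.
Proof.
  intros H H1 k Hk. pose proof (spos_ok p H H1) as SP. pose proof (S0_pos p H) as HS.
  destruct H as (HL&Hb&Hg&Hm&Hp&He&Ht&Hd&Hta&Ha&Ho).
  assert (0 < Aw p * gamma p) by (pose proof (sp_A p SP); nra).
  assert (0 < Aw p * beta p * S0 p) by (pose proof (sp_A p SP); apply Rmult_lt_0_compat; nra).
  pose proof (sp_B p SP). pose proof (sp_C p SP).
  unfold mw, Mw, wts.
  set (a5 := Cw p) in *. set (a4 := Bw p) in *. set (a3 := Aw p * beta p * S0 p) in *. set (a2 := Aw p * gamma p) in *.
  pose proof (Rmin_l (pi_ p) (Rmin (theta p) (Rmin a2 (Rmin a3 (Rmin a4 a5))))).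
  pose proof (Rmin_r (pi_ p) (Rmin (theta p) (Rmin a2 (Rmin a3 (Rmin a4 a5))))).
  pose proof (Rmin_l (theta p) (Rmin a2 (Rmin a3 (Rmin a4 a5)))).
  pose proof (Rmin_r (theta p) (Rmin a2 (Rmin a3 (Rmin a4 a5)))).
  pose proof (Rmin_l a2 (Rmin a3 (Rmin a4 a5))). pose proof (Rmin_r a2 (Rmin a3 (Rmin a4 a5))).
  pose proof (Rmin_l a3 (Rmin a4 a5)). pose proof (Rmin_r a3 (Rmin a4 a5)).
  pose proof (Rmin_l a4 a5). pose proof (Rmin_r a4 a5).
  destruct k as [|[|[|[|[|[|k]]]]]]; try lia; cbv beta iota.
  all: split; lra.
Qed.

Lemma key_stab p z : params_pos p -> Rv p < 1 -> Rabs (sS z - S0 p) <= r0 p -> Rabs (sI z) <= r0 p ->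
  Qdot p (wts p) (E0 p) z <= - 2 * nu p * sq6 z (E0 p).
Proof.
  intros H H1 Hx Hi. pose proof (spos_ok p H H1) as SP. pose proof (S0_pos p H) as HS.
  pose proof (rho_lt p H H1) as Hrho.
  assert (Hqdot : Qdot p (wts p) (E0 p) z = 2 * (
    pi_ p * (sS z - S0 p) * (eta p * sR z + theta p * (sV z - V0 p) - (pi_ p + mu p) * (sS z - S0 p) - beta p * S0 p * sI z - beta p * (sS z - S0 p) * sI z)
    + theta p * (sV z - V0 p) * (pi_ p * (sS z - S0 p) - (theta p + mu p) * (sV z - V0 p))
    + Aw p * gamma p * sE z * (beta p * S0 p * sI z + beta p * (sS z - S0 p) * sI z - kE p * sE z)
    + Aw p * beta p * S0 p * sI z * (gamma p * sE z - kI p * sI z)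
    + Bw p * sT z * (delta p * sI z - kT p * sT z) + Cw p * sR z * (alpha p * sT z - kR p * sR z))).
  { unfold Qdot. rewrite (fS_dev p z H), (fV_dev p z H), (fE_dev p z). unfold wts, S0, V0, E0, fI, fT, fR, kI, kT, kR; simpl. ring. }
  rewrite Hqdot.
  destruct H as (HL&Hb&Hg&Hm&Hp&He&Ht&Hd&Hta&Ha&Ho).
  assert (Hke : 0 < kE p) by (unfold kE; lra). assert (Hki : 0 < kI p) by (unfold kI; lra).
  assert (Hkt : 0 < kT p) by (unfold kT; lra). assert (Hkr : 0 < kR p) by (unfold kR; lra).
  pose proof (sp_qx p SP). pose proof (sp_qe p SP). pose proof (sp_qi p SP).
  assert (Hcore := stab_core (pi_ p) (theta p) (mu p) (eta p) (beta p) (S0 p) (gamma p) (kE p) (kI p) (delta p) (kT p)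
     (alpha p) (kR p) (qx p) (qv p) (qe p) (qi p) (Y1 p) (Y2 p) (Aw p) (Bw p) (Cw p) (r0 p)
     (sS z - S0 p) (sV z - V0 p) (sE z) (sI z) (sT z) (sR z)).
  assert (HSV : forall x v, pi_ p * (pi_ p + mu p) * x^2 - 2 * pi_ p * theta p * x * v + theta p * (theta p + mu p) * v^2 >= qx p * x^2 + qv p * v^2).
  { intros x v. assert (pi_ p * (pi_ p + mu p) * x^2 - 2 * pi_ p * theta p * x * v + theta p * (theta p + mu p) * v^2 - (qx p * x^2 + qv p * v^2)
      = pi_ p * theta p / ((theta p + mu p) * (pi_ p + mu p)) * ((pi_ p + mu p) * x - (theta p + mu p) * v)^2).
    { unfold qx, qv. field. lra. }
    assert (0 <= pi_ p * theta p / ((theta p + mu p) * (pi_ p + mu p)) * ((pi_ p + mu p) * x - (theta p + mu p) * v)^2).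
    { apply Rmult_le_pos. apply Rmult_le_pos. nra. apply Rlt_le, Rinv_0_lt_compat; nra. apply pow2_ge_0. }
    lra. }
  assert (HEI : forall e i, gamma p * kE p * e^2 - 2 * gamma p * beta p * S0 p * e * i + beta p * S0 p * kI p * i^2 >= qe p * e^2 + qi p * i^2).
  { intros e i.
    assert (gamma p * kE p * e^2 - 2 * gamma p * beta p * S0 p * e * i + beta p * S0 p * kI p * i^2 - (qe p * e^2 + qi p * i^2)
      = ((1 + rho p) / 2) * (gamma p * kE p) * e^2 - 2 * (gamma p * beta p * S0 p) * e * i + ((1 + rho p)/2) * (beta p * S0 p * kI p) * i^2).
    { unfold qe, qi. field. }
    assert (0 <= rho p). { unfold rho. apply Rlt_le, Rdiv_lt_0_compat. apply Rmult_lt_0_compat; [apply Rmult_lt_0_compat|]; lra. apply Rmult_lt_0_compat; lra. }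
    assert (0 <= ((1 + rho p) / 2) * (gamma p * kE p) * e^2 - 2 * (gamma p * beta p * S0 p) * e * i + ((1 + rho p)/2) * (beta p * S0 p * kI p) * i^2).
    { apply quad_nonneg. lra. nra. apply Rmult_lt_0_compat; nra.
      assert (Hq : (gamma p * beta p * S0 p)^2 = rho p * ((gamma p * kE p) * (beta p * S0 p * kI p))).
      { unfold rho. field. lra. }
      rewrite Hq. assert (HP : 0 < (gamma p * kE p) * (beta p * S0 p * kI p)) by (apply Rmult_lt_0_compat; [nra|apply Rmult_lt_0_compat; nra]).
      assert (Hk : rho p <= ((1 + rho p)/2)^2) by (pose proof (pow2_ge_0 (1 - rho p)); nra).
      replace (((1 + rho p) / 2) ^ 2 * (gamma p * kE p) * (beta p * S0 p * kI p)) with (((1 + rho p) / 2) ^ 2 * ((gamma p * kE p) * (beta p * S0 p * kI p))) by ring.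
      apply Rmult_le_compat_r; lra. }
    lra. }
  assert (r0a : r0 p <= qx p / (4 * (pi_ p * beta p))) by (unfold r0; apply Rmin_l).
  assert (r0b : r0 p <= qe p / (gamma p * beta p)) by (unfold r0; eapply Rle_trans; [apply Rmin_r|apply Rmin_l]).
  assert (r0c : r0 p <= qi p / (2 * (gamma p * beta p))) by (unfold r0; eapply Rle_trans; [apply Rmin_r|apply Rmin_r]).
  assert (Hr1 : pi_ p * beta p * r0 p <= qx p / 4).
  { apply (Rmult_le_compat_l (pi_ p * beta p)) in r0a; [|nra]. replace (pi_ p * beta p * (qx p / (4 * (pi_ p * beta p)))) with (qx p / 4) in r0a by (field; lra). lra. }
  assert (Hr2 : gamma p * beta p * r0 p <= qe p).
  { apply (Rmult_le_compat_l (gamma p * beta p)) in r0b; [|nra]. replace (gamma p * beta p * (qe p / (gamma p * beta p))) with (qe p) in r0b by (field; lra). lra. }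
  assert (Hr3 : gamma p * beta p * r0 p <= qi p / 2).
  { apply (Rmult_le_compat_l (gamma p * beta p)) in r0c; [|nra]. replace (gamma p * beta p * (qi p / (2 * (gamma p * beta p)))) with (qi p / 2) in r0c by (field; lra). lra. }
  specialize (Hcore Hp Ht Hm Hb Hg Hkt Hkr H (sp_A p SP) (sp_B p SP) (sp_C p SP) (sp_Y2 p SP)
    (HSV _ _) (HEI _ _) eq_refl eq_refl).
  assert (HCr : Cw p * kR p = 2 * (Y1 p + 1)) by (unfold Cw; field; lra).
  assert (HBr : Bw p * kT p = 2 * (Cw p * alpha p ^ 2 / kR p) + 1) by (unfold Bw; field; lra).
  assert (HAr : Aw p * qi p = 8 * (Y2 p + Bw p * delta p ^ 2 / kT p / 2 + 1)) by (unfold Aw; field; lra).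
  specialize (Hcore HCr HBr HAr Hr1 Hr2 Hr3 Hx Hi).
  assert (Hnu1 : nu p <= qx p / 4) by (unfold nu; apply Rmin_l).
  assert (Hnu2 : nu p <= qv p) by (unfold nu; eapply Rle_trans; [apply Rmin_r|apply Rmin_l]).
  assert (Hnu3 : nu p <= Aw p * qe p / 2) by (unfold nu; eapply Rle_trans; [apply Rmin_r|eapply Rle_trans; [apply Rmin_r|apply Rmin_l]]).
  assert (Hnu4 : nu p <= 1/2) by (unfold nu; eapply Rle_trans; [apply Rmin_r|eapply Rle_trans; [apply Rmin_r|apply Rmin_r]]).
  unfold sq6. change (sS (E0 p)) with (S0 p). change (sV (E0 p)) with (V0 p).
  replace (sE (E0 p)) with 0 by reflexivity. replace (sI (E0 p)) with 0 by reflexivity.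
  replace (sT (E0 p)) with 0 by reflexivity. replace (sR (E0 p)) with 0 by reflexivity.
  set (X := sS z - S0 p) in *. set (Vv := sV z - V0 p) in *.
  pose proof (pow2_ge_0 X). pose proof (pow2_ge_0 Vv). pose proof (pow2_ge_0 (sE z)). pose proof (pow2_ge_0 (sI z)).
  pose proof (pow2_ge_0 (sT z)). pose proof (pow2_ge_0 (sR z)).
  replace (sE z - 0) with (sE z) by ring. replace (sI z - 0) with (sI z) by ring.
  replace (sT z - 0) with (sT z) by ring. replace (sR z - 0) with (sR z) by ring.
  assert (nu p * X^2 <= qx p / 4 * X^2) by (apply Rmult_le_compat_r; lra).
  assert (nu p * Vv^2 <= qv p * Vv^2) by (apply Rmult_le_compat_r; lra).
  assert (nu p * sE z^2 <= Aw p * qe p / 2 * sE z^2) by (apply Rmult_le_compat_r; lra).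
  assert (nu p * sI z^2 <= 1 * sI z^2) by (apply Rmult_le_compat_r; lra).
  assert (nu p * sT z^2 <= 1/2 * sT z^2) by (apply Rmult_le_compat_r; lra).
  assert (nu p * sR z^2 <= 1 * sR z^2) by (apply Rmult_le_compat_r; lra).
  lra.
Qed.

Lemma sq_lt_abs a r : 0 < r -> a^2 < r^2 -> Rabs a < r.
Proof. intros Hr H. rewrite <- pow2_abs in H. pose proof (Rabs_pos a).
  destruct (Rlt_le_dec (Rabs a) r); auto. nra. Qed.

Lemma comp_le_sq6 z c : (sS z - sS c)^2 <= sq6 z c /\ (sI z - sI c)^2 <= sq6 z c.
Proof. unfold sq6. pose proof (pow2_ge_0 (sS z - sS c)). pose proof (pow2_ge_0 (sV z - sV c)).
  pose proof (pow2_ge_0 (sE z - sE c)). pose proof (pow2_ge_0 (sI z - sI c)).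
  pose proof (pow2_ge_0 (sT z - sT c)). pose proof (pow2_ge_0 (sR z - sR c)). lra. Qed.

Lemma stab_common p b x r : params_pos p -> Rv p < 1 -> 0 < r <= r0 p -> is_solution p b x ->
  sq6 (x 0) (E0 p) < (r * mw p / Mw p)^2 ->
  forall t, 0 <= t -> Rbar_lt (Finite t) b ->
  sq6 (x t) (E0 p) < r^2 /\
  Qw (wts p) (E0 p) (x t) * exp (2 * nu p / Mw p * t) <= Qw (wts p) (E0 p) (x 0).
Proof.
  intros H H1 Hr Hs H0 t Ht Htb. pose proof (spos_ok p H H1) as SP.
  pose proof (sp_mw p SP) as Hmw. pose proof (sp_mM p SP) as HmM. pose proof (sp_nu p SP) as Hnu.
  assert (HB : forall z, mw p * sq6 z (E0 p) <= Qw (wts p) (E0 p) z <= Mw p * sq6 z (E0 p)).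
  { intros z. apply Qw_bounds. lra. apply wts_bounds; auto. }
  set (K := mw p * r^2).
  assert (HK : 0 < K) by (unfold K; apply Rmult_lt_0_compat; [lra|apply pow_lt; lra]).
  assert (HMw : 0 < Mw p) by lra.
  assert (HL0 : Qw (wts p) (E0 p) (x 0) < K).
  { destruct (HB (x 0)) as [_ Hu]. eapply Rle_lt_trans. exact Hu.
    apply Rlt_le_trans with (Mw p * (r * mw p / Mw p)^2).
    { apply Rmult_lt_compat_l; lra. }
    replace (Mw p * (r * mw p / Mw p)^2) with (mw p * r^2 * (mw p / Mw p)) by (field; lra).
    unfold K. assert (Hq : mw p / Mw p <= 1). { unfold Rdiv. rewrite <- (Rinv_r (Mw p)) by lra.
      apply Rmult_le_compat_r. apply Rlt_le, Rinv_0_lt_compat; lra. lra. }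
    assert (0 <= mw p * r^2) by (unfold K in HK; lra).
    replace (mw p * r^2) with (mw p * r^2 * 1) at 2 by ring. apply Rmult_le_compat_l; lra. }
  set (c := 2 * nu p / Mw p).
  assert (Hc : 0 < c) by (unfold c; apply Rdiv_lt_0_compat; lra).
  assert (Hd' : forall s, 0 < s -> Rbar_lt (Finite s) b -> is_derive (fun u => Qw (wts p) (E0 p) (x u)) s (Qdot p (wts p) (E0 p) (x s))).
  { intros s Hs0 Hsb. apply (Qw_deriv p b); auto. }
  assert (Hdec : forall s, 0 < s -> Rbar_lt (Finite s) b -> Qw (wts p) (E0 p) (x s) < K -> Qdot p (wts p) (E0 p) (x s) <= - c * Qw (wts p) (E0 p) (x s)).
  { intros s Hs0 Hsb HLs. destruct (HB (x s)) as [Hl Hu].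
    assert (Hsq : sq6 (x s) (E0 p) < r^2). { unfold K in HLs. nra. }
    destruct (comp_le_sq6 (x s) (E0 p)) as [C1 C2].
    assert (Hx : Rabs (sS (x s) - S0 p) <= r0 p).
    { apply Rlt_le, Rlt_le_trans with r; [|lra]. apply sq_lt_abs. lra. unfold S0. lra. }
    assert (Hi : Rabs (sI (x s)) <= r0 p).
    { apply Rlt_le, Rlt_le_trans with r; [|lra]. apply sq_lt_abs. lra. replace (sI (x s)) with (sI (x s) - sI (E0 p)) by (simpl; ring). lra. }
    eapply Rle_trans. apply key_stab; auto.
    unfold c. replace (- (2 * nu p / Mw p) * Qw (wts p) (E0 p) (x s)) with (- 2 * nu p * (Qw (wts p) (E0 p) (x s) / Mw p)) by (field; lra).
    assert (Qw (wts p) (E0 p) (x s) / Mw p <= sq6 (x s) (E0 p)).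
    { apply (Rmult_le_reg_r (Mw p)). lra. unfold Rdiv. rewrite Rmult_assoc, Rinv_l by lra. lra. }
    nra. }
  destruct (decay (fun u => Qw (wts p) (E0 p) (x u)) (fun u => Qdot p (wts p) (E0 p) (x u)) b K c Hc HK HL0
     (Qw_rc p b x (wts p) (E0 p) Hs) Hd' Hdec t Ht Htb) as [D1 D2].
  { split; auto. destruct (HB (x t)) as [Hl Hu]. unfold K in D1. nra. }
Qed.

Lemma stable_part p : params_pos p -> Rv p < 1 -> loc_asym_stable p (E0 p).
Proof.
  intros H H1. pose proof (spos_ok p H H1) as SP.
  pose proof (sp_mw p SP) as Hmw. pose proof (sp_mM p SP) as HmM. pose proof (sp_nu p SP) as Hnu.
  pose proof (sp_r0 p SP) as Hr0.
  split.
  - intros eps Heps. set (r := Rmin (r0 p) eps).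
    assert (Hr : 0 < r) by (unfold r; apply Rmin_pos; lra).
    assert (Hr1 : r <= r0 p) by apply Rmin_l. assert (Hr2 : r <= eps) by apply Rmin_r.
    exists (r * mw p / Mw p). split. apply Rdiv_lt_0_compat; nra.
    intros b x Hs Hd t Ht Htb.
    apply dist_lt in Hd; [|apply Rdiv_lt_0_compat; nra].
    destruct (stab_common p b x r H H1 (conj Hr Hr1) Hs Hd t Ht Htb) as [D1 _].
    apply dist_lt; auto. assert (r^2 <= eps^2) by (apply pow_incr; lra). lra.
  - exists (r0 p * mw p / Mw p). split. apply Rdiv_lt_0_compat; nra.
    intros x Hs Hd. apply dist_lt in Hd; [|apply Rdiv_lt_0_compat; nra].
    pose proof (stab_common p p_infty x (r0 p) H H1 (conj Hr0 (Rle_refl _)) Hs Hd) as SC.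
    set (c := 2 * nu p / Mw p) in *. assert (Hc : 0 < c) by (unfold c; apply Rdiv_lt_0_compat; lra).
    set (L0 := Qw (wts p) (E0 p) (x 0)) in *.
    assert (HB : forall z, mw p * sq6 z (E0 p) <= Qw (wts p) (E0 p) z <= Mw p * sq6 z (E0 p)).
    { intros z. apply Qw_bounds. lra. apply wts_bounds; auto. }
    assert (HL0 : 0 <= L0). { destruct (HB (x 0)) as [Hl _]. pose proof (sq6_ge0 (x 0) (E0 p)). unfold L0. nra. }
    unfold is_lim. apply filterlim_locally. intros eps. simpl.
    pose proof (cond_pos eps) as He.
    exists (L0 / (mw p * eps^2 * c)). intros t Ht.
    assert (HM : 0 <= L0 / (mw p * eps^2 * c)).
    { apply Rmult_le_pos; auto. apply Rlt_le, Rinv_0_lt_compat. apply Rmult_lt_0_compat; [|lra]. apply Rmult_lt_0_compat; [lra|apply pow_lt; lra]. }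
    destruct (SC t ltac:(lra) I) as [_ D2].
    apply ball_R. rewrite Rminus_0_r. rewrite Rabs_right by (apply Rle_ge; unfold dist6; apply sqrt_pos).
    apply dist_lt; auto.
    destruct (HB (x t)) as [Hl _].
    assert (Hexp : L0 < mw p * eps^2 * exp (c * t)).
    { pose proof (exp_ineq1_le (c * t)). assert (L0 < mw p * eps^2 * (c * t)).
      { assert (0 < mw p * eps^2 * c) by (apply Rmult_lt_0_compat; [apply Rmult_lt_0_compat; [lra|apply pow_lt; lra]|lra]).
        replace (mw p * eps^2 * (c * t)) with ((mw p * eps^2 * c) * t) by ring.
        apply Rmult_lt_compat_l with (r := mw p * eps^2 * c) in Ht; auto.
        replace (mw p * eps ^ 2 * c * (L0 / (mw p * eps ^ 2 * c))) with L0 in Ht by (field; split; lra). lra. }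
      assert (0 < mw p * eps^2) by (apply Rmult_lt_0_compat; [lra|apply pow_lt; lra]). nra. }
    assert (Qw (wts p) (E0 p) (x t) < mw p * eps^2).
    { pose proof (exp_pos (c * t)). 
      destruct (Rlt_le_dec (Qw (wts p) (E0 p) (x t)) (mw p * eps^2)); auto. nra. }
    nra.
Qed.

(* Chetaev algebra for the (E,I) block: a = kE, bb = beta S0, c = gamma, d = kI *)
Definition Dd a bb c d := bb * c - a * d.
Definition s1 a bb c d := (a + d) * Dd a bb c d / (2 * a * bb * d).
Definition s2 a bb c d := (a + d) * Dd a bb c d / (2 * a * c * d).
Definition pch a bb c d := c / a - s1 a bb c d.
Definition rch a bb c d := bb / d - s2 a bb c d.
Definition Wf P Rr e i := P * (e * e) + 2 * (e * i) + Rr * (i * i).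

Lemma chet_identity a bb c d be X e i : 0 < a -> 0 < bb -> 0 < c -> 0 < d ->
  2 * pch a bb c d * e * (bb * i + be * X * i - a * e) + 2 * ((bb * i + be * X * i - a * e) * i + e * (c * e - d * i))
  + 2 * rch a bb c d * i * (c * e - d * i)
  = 2 * (a * s1 a bb c d) * (e * e) + 2 * (d * s2 a bb c d) * (i * i) + 2 * (pch a bb c d * e + i) * (be * X * i).
Proof. intros. unfold pch, rch, s1, s2, Dd. field. lra. Qed.

Lemma s12_pos a bb c d : 0 < a -> 0 < bb -> 0 < c -> 0 < d -> a * d < bb * c ->
  0 < a * s1 a bb c d /\ 0 < d * s2 a bb c d.
Proof.
  intros. unfold s1, s2, Dd. split; apply Rmult_lt_0_compat; auto; apply Rdiv_lt_0_compat; try nra;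
  apply Rmult_lt_0_compat; try lra; apply Rmult_lt_0_compat; nra.
Qed.

Lemma pr_lt1 a bb c d : 0 < a -> 0 < bb -> 0 < c -> 0 < d -> a * d < bb * c ->
  pch a bb c d * rch a bb c d < 1.
Proof.
  intros. assert (1 - pch a bb c d * rch a bb c d =
    Dd a bb c d * (bb * c * (a - d)^2 + a * d * (a + d)^2) / (4 * a^2 * bb * c * d^2)).
  { unfold pch, rch, s1, s2, Dd. field. lra. }
  assert (0 < Dd a bb c d * (bb * c * (a - d)^2 + a * d * (a + d)^2) / (4 * a^2 * bb * c * d^2)).
  { apply Rdiv_lt_0_compat. apply Rmult_lt_0_compat. unfold Dd; lra.
    assert (0 <= bb * c * (a - d)^2) by (apply Rmult_le_pos; [nra|apply pow2_ge_0]).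
    assert (0 < a * d * (a + d)^2) by (apply Rmult_lt_0_compat; [nra|apply pow_lt; lra]). lra.
    assert (0 < a^2) by (apply pow_lt; lra). assert (0 < d^2) by (apply pow_lt; lra).
    repeat apply Rmult_lt_0_compat; lra. }
  lra.
Qed.

Lemma W_pos_dir P Rr : P * Rr < 1 -> exists e i, 0 < Wf P Rr e i.
Proof.
  intros H. destruct (Rlt_le_dec Rr 0) as [h|h].
  - exists (- Rr), 1. unfold Wf. nra.
  - exists (/ (Rabs P + 1)), 1. unfold Wf. pose proof (Rabs_pos P).
    set (u := / (Rabs P + 1)). assert (Hu : 0 < u) by (apply Rinv_0_lt_compat; lra).
    assert (Hu1 : u * (Rabs P + 1) = 1) by (unfold u; field; lra).
    assert (- Rabs P <= P) by (pose proof (Rle_abs (- P)); rewrite Rabs_Ropp in H1; lra).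
    assert (P * (u * u) >= - Rabs P * (u * u)) by (apply Rle_ge, Rmult_le_compat_r; nra).
    nra.
Qed.

Lemma W_bound P Rr e i : Rabs (Wf P Rr e i) <= (Rabs P + 1 + Rabs Rr) * (e * e + i * i).
Proof.
  unfold Wf. pose proof (Rabs_pos e). pose proof (Rabs_pos i). pose proof (Rabs_pos P). pose proof (Rabs_pos Rr).
  assert (He : Rabs e * Rabs e = e * e) by (rewrite <- Rabs_mult; apply Rabs_right; nra).
  assert (Hi : Rabs i * Rabs i = i * i) by (rewrite <- Rabs_mult; apply Rabs_right; nra).
  assert (Hei : 2 * (Rabs e * Rabs i) <= e * e + i * i) by (pose proof (pow2_ge_0 (Rabs e - Rabs i)); nra).
  eapply Rle_trans. apply Rabs_triang. eapply Rle_trans. apply Rplus_le_compat_r. apply Rabs_triang.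
  rewrite !Rabs_mult. rewrite (Rabs_right 2) by lra.
  assert (0 <= e * e) by nra. assert (0 <= i * i) by nra.
  rewrite He, Hi. nra.
Qed.

Lemma pert_bound P be X e i m : 0 < be -> 0 < m -> Rabs X <= m / (2 * be * (Rabs P + 1)) ->
  Rabs (2 * (P * e + i) * (be * X * i)) <= m * (e * e + i * i).
Proof.
  intros Hb Hm HX. pose proof (Rabs_pos P). pose proof (Rabs_pos X).
  rewrite !Rabs_mult. rewrite (Rabs_right 2) by lra. rewrite (Rabs_right be) by lra.
  assert (H1 : Rabs (P * e + i) <= Rabs P * Rabs e + Rabs i).
  { eapply Rle_trans. apply Rabs_triang. rewrite Rabs_mult. lra. }
  pose proof (Rabs_pos e). pose proof (Rabs_pos i).
  assert (Rabs e * Rabs e = e * e) by (rewrite <- Rabs_mult; apply Rabs_right; nra).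
  assert (Rabs i * Rabs i = i * i) by (rewrite <- Rabs_mult; apply Rabs_right; nra).
  assert (2 * Rabs e * Rabs i <= e * e + i * i) by (pose proof (pow2_ge_0 (Rabs e - Rabs i)); nra).
  assert (HPi : (Rabs P * Rabs e + Rabs i) * Rabs i <= (Rabs P + 1) * (e * e + i * i)).
  { assert (Rabs P * (Rabs e * Rabs i) <= Rabs P * (e * e + i * i)) by (apply Rmult_le_compat_l; nra). nra. }
  assert (HX' : 2 * be * (Rabs P + 1) * Rabs X <= m).
  { apply (Rmult_le_compat_l (2 * be * (Rabs P + 1))) in HX; [|nra].
    replace (2 * be * (Rabs P + 1) * (m / (2 * be * (Rabs P + 1)))) with m in HX by (field; lra). lra. }
  assert (0 <= Rabs (P * e + i) * Rabs i) by (apply Rmult_le_pos; apply Rabs_pos).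
  assert (HR : 2 * Rabs (P * e + i) * (be * Rabs X * Rabs i) = (2 * be * Rabs X) * (Rabs (P * e + i) * Rabs i)) by ring.
  rewrite HR.
  apply Rle_trans with ((2 * be * Rabs X) * ((Rabs P + 1) * (e * e + i * i))).
  { apply Rmult_le_compat_l. nra. eapply Rle_trans; [|exact HPi]. apply Rmult_le_compat_r. apply Rabs_pos. exact H1. }
  assert (0 <= e * e + i * i) by nra.
  replace (2 * be * Rabs X * ((Rabs P + 1) * (e * e + i * i))) with ((2 * be * (Rabs P + 1) * Rabs X) * (e * e + i * i)) by ring.
  apply Rmult_le_compat_r; lra.
Qed.

Definition clampM (M u : R) := Rmax (- M) (Rmin M u).

Lemma clamp_abs M u : 0 <= M -> Rabs (clampM M u) <= M.
Proof. intros H. unfold clampM, Rmax, Rmin.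
  destruct (Rle_dec M u); destruct (Rle_dec (- M) _); unfold Rabs; destruct (Rcase_abs _); lra. Qed.

Lemma clamp_lip M u v : 0 <= M -> Rabs (clampM M u - clampM M v) <= Rabs (u - v).
Proof. intros H. unfold clampM, Rmax, Rmin.
  destruct (Rle_dec M u); destruct (Rle_dec M v);
  repeat match goal with |- context [Rle_dec ?a ?b] => destruct (Rle_dec a b) end;
  unfold Rabs; repeat destruct (Rcase_abs _); lra. Qed.

Lemma clamp_id M u : Rabs u <= M -> clampM M u = u.
Proof. intros H. assert (- M <= u <= M) by (unfold Rabs in H; destruct (Rcase_abs u); lra). unfold clampM. rewrite Rmin_right by lra. rewrite Rmax_right by lra. reflexivity. Qed.

Lemma clamp_prod M a b a' b' : 0 <= M ->
  Rabs (clampM M a * clampM M b - clampM M a' * clampM M b') <= M * Rabs (a - a') + M * Rabs (b - b').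
Proof.
  intros HM. replace (clampM M a * clampM M b - clampM M a' * clampM M b') with
    (clampM M a * (clampM M b - clampM M b') + clampM M b' * (clampM M a - clampM M a')) by ring.
  eapply Rle_trans. apply Rabs_triang. rewrite !Rabs_mult.
  pose proof (clamp_abs M a HM). pose proof (clamp_abs M b' HM).
  pose proof (clamp_lip M a a' HM). pose proof (clamp_lip M b b' HM).
  pose proof (Rabs_pos (clampM M a)). pose proof (Rabs_pos (clampM M b')).
  pose proof (Rabs_pos (clampM M b - clampM M b')). pose proof (Rabs_pos (clampM M a - clampM M a')).
  assert (Rabs (clampM M a) * Rabs (clampM M b - clampM M b') <= M * Rabs (b - b')).
  { apply Rle_trans with (M * Rabs (clampM M b - clampM M b')). apply Rmult_le_compat_r; lra. apply Rmult_le_compat_l; lra. }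
  assert (Rabs (clampM M b') * Rabs (clampM M a - clampM M a') <= M * Rabs (a - a')).
  { apply Rle_trans with (M * Rabs (clampM M a - clampM M a')). apply Rmult_le_compat_r; lra. apply Rmult_le_compat_l; lra. }
  lra.
Qed.

Lemma gen_bound a0 a1 a2 a3 a4 a5 s be q M K d0 d1 d2 d3 d4 d5 :
  Rabs s <= 1 -> 0 <= be -> 0 <= M -> Rabs q <= M * Rabs d0 + M * Rabs d3 ->
  Rabs a0 + be * M <= K -> Rabs a1 <= K -> Rabs a2 <= K -> Rabs a3 + be * M <= K -> Rabs a4 <= K -> Rabs a5 <= K ->
  Rabs (a0 * d0 + a1 * d1 + a2 * d2 + a3 * d3 + a4 * d4 + a5 * d5 + s * be * q) <=
  K * (Rabs d0 + Rabs d1 + Rabs d2 + Rabs d3 + Rabs d4 + Rabs d5).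
Proof.
  intros Hs Hbe HM Hq H0 H1 H2 H3 H4 H5.
  eapply Rle_trans. apply Rabs_triang. eapply Rle_trans. apply Rplus_le_compat_r. apply Rabs_triang.
  eapply Rle_trans. apply Rplus_le_compat_r. apply Rplus_le_compat_r. apply Rabs_triang.
  eapply Rle_trans. apply Rplus_le_compat_r. apply Rplus_le_compat_r. apply Rplus_le_compat_r. apply Rabs_triang.
  eapply Rle_trans. apply Rplus_le_compat_r. apply Rplus_le_compat_r. apply Rplus_le_compat_r. apply Rplus_le_compat_r. apply Rabs_triang.
  eapply Rle_trans. apply Rplus_le_compat_r. apply Rplus_le_compat_r. apply Rplus_le_compat_r. apply Rplus_le_compat_r. apply Rplus_le_compat_r. apply Rabs_triang.
  rewrite !Rabs_mult. rewrite (Rabs_right be) by lra.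
  pose proof (Rabs_pos d0). pose proof (Rabs_pos d1). pose proof (Rabs_pos d2). pose proof (Rabs_pos d3).
  pose proof (Rabs_pos d4). pose proof (Rabs_pos d5). pose proof (Rabs_pos s). pose proof (Rabs_pos q).
  assert (Rabs s * be * Rabs q <= be * (M * Rabs d0 + M * Rabs d3)).
  { apply Rle_trans with (1 * be * Rabs q). apply Rmult_le_compat_r. lra. apply Rmult_le_compat_r; lra.
    rewrite Rmult_1_l. apply Rmult_le_compat_l; lra. }
  assert ((Rabs a0 + be * M) * Rabs d0 <= K * Rabs d0) by (apply Rmult_le_compat_r; lra).
  assert (Rabs a1 * Rabs d1 <= K * Rabs d1) by (apply Rmult_le_compat_r; lra).
  assert (Rabs a2 * Rabs d2 <= K * Rabs d2) by (apply Rmult_le_compat_r; lra).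
  assert ((Rabs a3 + be * M) * Rabs d3 <= K * Rabs d3) by (apply Rmult_le_compat_r; lra).
  assert (Rabs a4 * Rabs d4 <= K * Rabs d4) by (apply Rmult_le_compat_r; lra).
  assert (Rabs a5 * Rabs d5 <= K * Rabs d5) by (apply Rmult_le_compat_r; lra).
  lra.
Qed.

Definition Fm (p : params) (M : R) (i : nat) (y : nat -> R) : R :=
  match i with
  | 0%nat => Lam p + eta p * y 5%nat + theta p * y 1%nat - beta p * (clampM M (y 0%nat) * clampM M (y 3%nat)) - (pi_ p + mu p) * y 0%nat
  | 1%nat => pi_ p * y 0%nat - (theta p + mu p) * y 1%nat
  | 2%nat => beta p * (clampM M (y 0%nat) * clampM M (y 3%nat)) - (gamma p + mu p) * y 2%nat
  | 3%nat => gamma p * y 2%nat - (delta p + tau p + mu p) * y 3%nat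
  | 4%nat => delta p * y 3%nat - (alpha p + omega p + mu p) * y 4%nat
  | 5%nat => alpha p * y 4%nat - (eta p + mu p) * y 5%nat
  | _ => 0
  end.

Definition Kf p M := Lam p + beta p + gamma p + mu p + pi_ p + eta p + theta p + delta p + tau p + alpha p + omega p + beta p * M + 1.

Ltac closeK := first [ lra | rewrite Rabs_R0; unfold Kf; lra | rewrite Rabs_R1; lra | rewrite Rabs_Ropp, Rabs_R1; lra
  | rewrite Rabs_Ropp, Rabs_right by lra; unfold Kf; lra | rewrite Rabs_right by lra; unfold Kf; lra ].

Lemma Fm_lip p M : params_pos p -> 0 <= M -> Lip (Fm p M) (Kf p M).
Proof.
  intros (HL&Hb&Hg&Hm&Hp&He&Ht&Hd&Hta&Ha&Ho) HM i y z. unfold nrm6.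
  set (q := clampM M (y 0%nat) * clampM M (y 3%nat) - clampM M (z 0%nat) * clampM M (z 3%nat)).
  assert (Hq : Rabs q <= M * Rabs (y 0%nat - z 0%nat) + M * Rabs (y 3%nat - z 3%nat)) by (apply clamp_prod; auto).
  assert (HbM : 0 <= beta p * M) by nra.
  assert (Hab : forall u, 0 <= u -> Rabs u = u) by (intros; apply Rabs_right; lra).
  assert (HK : forall u, 0 <= u -> u <= Kf p M -> Rabs u <= Kf p M) by (intros u Hu Hk; rewrite Hab; auto).
  assert (HK0 : Rabs 0 <= Kf p M) by (rewrite Rabs_R0; unfold Kf; lra).
  assert (HKn : forall u, 0 <= u -> u <= Kf p M -> Rabs (- u) <= Kf p M) by (intros u Hu Hk; rewrite Rabs_Ropp, Hab; auto).
  destruct i as [|[|[|[|[|[|i]]]]]]; simpl.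
  - replace (Lam p + eta p * y 5%nat + theta p * y 1%nat - beta p * (clampM M (y 0%nat) * clampM M (y 3%nat)) - (pi_ p + mu p) * y 0%nat -
      (Lam p + eta p * z 5%nat + theta p * z 1%nat - beta p * (clampM M (z 0%nat) * clampM M (z 3%nat)) - (pi_ p + mu p) * z 0%nat))
      with ((- (pi_ p + mu p)) * (y 0%nat - z 0%nat) + theta p * (y 1%nat - z 1%nat) + 0 * (y 2%nat - z 2%nat) + 0 * (y 3%nat - z 3%nat)
            + 0 * (y 4%nat - z 4%nat) + eta p * (y 5%nat - z 5%nat) + (- (1)) * beta p * q) by (unfold q; ring).
    apply gen_bound with (M := M); auto; try lra; closeK.
  - replace (pi_ p * y 0%nat - (theta p + mu p) * y 1%nat - (pi_ p * z 0%nat - (theta p + mu p) * z 1%nat))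
      with (pi_ p * (y 0%nat - z 0%nat) + (- (theta p + mu p)) * (y 1%nat - z 1%nat) + 0 * (y 2%nat - z 2%nat) + 0 * (y 3%nat - z 3%nat)
            + 0 * (y 4%nat - z 4%nat) + 0 * (y 5%nat - z 5%nat) + 0 * beta p * q) by ring.
    apply gen_bound with (M := M); auto; try lra; closeK.
  - replace (beta p * (clampM M (y 0%nat) * clampM M (y 3%nat)) - (gamma p + mu p) * y 2%nat -
      (beta p * (clampM M (z 0%nat) * clampM M (z 3%nat)) - (gamma p + mu p) * z 2%nat))
      with (0 * (y 0%nat - z 0%nat) + 0 * (y 1%nat - z 1%nat) + (- (gamma p + mu p)) * (y 2%nat - z 2%nat) + 0 * (y 3%nat - z 3%nat)
            + 0 * (y 4%nat - z 4%nat) + 0 * (y 5%nat - z 5%nat) + 1 * beta p * q) by (unfold q; ring).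
    apply gen_bound with (M := M); auto; try lra; closeK.
  - replace (gamma p * y 2%nat - (delta p + tau p + mu p) * y 3%nat - (gamma p * z 2%nat - (delta p + tau p + mu p) * z 3%nat))
      with (0 * (y 0%nat - z 0%nat) + 0 * (y 1%nat - z 1%nat) + gamma p * (y 2%nat - z 2%nat) + (- (delta p + tau p + mu p)) * (y 3%nat - z 3%nat)
            + 0 * (y 4%nat - z 4%nat) + 0 * (y 5%nat - z 5%nat) + 0 * beta p * q) by ring.
    apply gen_bound with (M := M); auto; try lra; closeK.
  - replace (delta p * y 3%nat - (alpha p + omega p + mu p) * y 4%nat - (delta p * z 3%nat - (alpha p + omega p + mu p) * z 4%nat))
      with (0 * (y 0%nat - z 0%nat) + 0 * (y 1%nat - z 1%nat) + 0 * (y 2%nat - z 2%nat) + delta p * (y 3%nat - z 3%nat)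
            + (- (alpha p + omega p + mu p)) * (y 4%nat - z 4%nat) + 0 * (y 5%nat - z 5%nat) + 0 * beta p * q) by ring.
    apply gen_bound with (M := M); auto; try lra; closeK.
  - replace (alpha p * y 4%nat - (eta p + mu p) * y 5%nat - (alpha p * z 4%nat - (eta p + mu p) * z 5%nat))
      with (0 * (y 0%nat - z 0%nat) + 0 * (y 1%nat - z 1%nat) + 0 * (y 2%nat - z 2%nat) + 0 * (y 3%nat - z 3%nat)
            + alpha p * (y 4%nat - z 4%nat) + (- (eta p + mu p)) * (y 5%nat - z 5%nat) + 0 * beta p * q) by ring.
    apply gen_bound with (M := M); auto; try lra; closeK.
  - rewrite Rminus_0_r, Rabs_R0. apply Rmult_le_pos. unfold Kf; lra.
    repeat apply Rplus_le_le_0_compat; apply Rabs_pos.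
Qed.

Lemma rc_of_cont g : continuity_pt g 0 -> rc g.
Proof.
  intros H. unfold rc. apply continuity_pt_comp with (f1 := fun u => Rmax 0 u). apply cont_max0.
  rewrite Rmax_left by lra. exact H.
Qed.

Lemma cont_sq f c t : continuity_pt f t -> continuity_pt (fun u => (f u - c)^2) t.
Proof.
  intros H. apply continuity_pt_ext with (f := fun u => (f u - c) * (f u - c)). intros; ring.
  apply continuity_pt_mult; apply continuity_pt_minus; auto; apply continuity_pt_const; intros ? ?; reflexivity.
Qed.

Lemma cheta_deriv (g h : R -> R) dg dh P Rr t : is_derive g t dg -> is_derive h t dh ->
  is_derive (fun u => Wf P Rr (g u) (h u)) t (2 * P * g t * dg + 2 * (dg * h t + g t * dh) + 2 * Rr * h t * dh).
Proof.
  intros Hg Hh. unfold Wf. auto_derive.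
  - repeat split; eexists; eauto.
  - change (fun x => g x) with g. change (fun x => h x) with h.
    rewrite (is_derive_unique _ _ _ Hg), (is_derive_unique _ _ _ Hh). ring.
Qed.

Definition mkY (Y : nat -> R -> R) (t : R) : state :=
  mkState (Y 0%nat t) (Y 1%nat t) (Y 2%nat t) (Y 3%nat t) (Y 4%nat t) (Y 5%nat t).

Lemma Fm_eq p Y t : params_pos p -> sq6 (mkY Y t) (E0 p) < 1 ->
  Fm p (S0 p + 1) 0%nat (fun j => Y j t) = fS p (mkY Y t) /\
  Fm p (S0 p + 1) 1%nat (fun j => Y j t) = fV p (mkY Y t) /\
  Fm p (S0 p + 1) 2%nat (fun j => Y j t) = fE p (mkY Y t) /\
  Fm p (S0 p + 1) 3%nat (fun j => Y j t) = fI p (mkY Y t) /\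
  Fm p (S0 p + 1) 4%nat (fun j => Y j t) = fT p (mkY Y t) /\
  Fm p (S0 p + 1) 5%nat (fun j => Y j t) = fR p (mkY Y t).
Proof.
  intros H Hs. pose proof (S0_pos p H).
  destruct (comp_le_sq6 (mkY Y t) (E0 p)) as [C1 C2].
  assert (A0 : Rabs (sS (mkY Y t) - sS (E0 p)) < 1) by (apply sq_lt_abs; [lra|rewrite pow1; lra]).
  assert (A3 : Rabs (sI (mkY Y t) - sI (E0 p)) < 1) by (apply sq_lt_abs; [lra|rewrite pow1; lra]).
  change (sS (mkY Y t)) with (Y 0%nat t) in A0. change (sS (E0 p)) with (S0 p) in A0.
  change (sI (mkY Y t)) with (Y 3%nat t) in A3. change (sI (E0 p)) with 0 in A3. rewrite Rminus_0_r in A3.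
  assert (B0 : Rabs (Y 0%nat t) <= S0 p + 1).
  { replace (Y 0%nat t) with ((Y 0%nat t - S0 p) + S0 p) by ring. eapply Rle_trans. apply Rabs_triang.
    rewrite (Rabs_right (S0 p)) by lra. lra. }
  assert (B3 : Rabs (Y 3%nat t) <= S0 p + 1) by lra.
  unfold Fm. rewrite (clamp_id _ _ B0), (clamp_id _ _ B3).
  unfold fS, fV, fE, fI, fT, fR, mkY; simpl. repeat split; ring.
Qed.

Lemma mkY_sol p Y (b : Rbar) : params_pos p -> Rbar_lt (Finite 0) b ->
  (forall i t, (i < 6)%nat -> continuity_pt (Y i) t) ->
  (forall i t, (i < 6)%nat -> 0 < t -> is_derive (Y i) t (Fm p (S0 p + 1) i (fun j => Y j t))) ->
  (forall t, 0 < t -> Rbar_lt (Finite t) b -> sq6 (mkY Y t) (E0 p) < 1) ->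
  is_solution p b (mkY Y).
Proof.
  intros H Hb Hc Hd Hs. split; [exact Hb|split].
  - intros t Ht Htb. destruct (Fm_eq p Y t H (Hs t Ht Htb)) as (E0'&E1&E2&E3&E4&E5).
    simpl. rewrite <- E0', <- E1, <- E2, <- E3, <- E4, <- E5.
    repeat split; apply Hd; auto; lia.
  - simpl. repeat split; apply filterlim_of_rc; apply rc_of_cont; apply Hc; lia.
Qed.

Lemma sq6_mkY_cont p Y t : (forall i t, (i < 6)%nat -> continuity_pt (Y i) t) ->
  continuity_pt (fun u => sq6 (mkY Y u) (E0 p)) t.
Proof.
  intros Hc. unfold sq6, mkY; simpl.
  repeat apply continuity_pt_plus; apply cont_sq; apply Hc; lia.
Qed.

Lemma unstable_part p : params_pos p -> Rv p > 1 -> unstable p (E0 p).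
Proof.
  intros H H1 Hst. pose proof (S0_pos p H) as HS0.
  pose proof H as (HL&Hb&Hg&Hm&Hp&He&Hth&Hdl0&Hta&Hal&Ho).
  set (a := kE p). set (bb := beta p * S0 p). set (c := gamma p). set (d := kI p).
  assert (Ha0 : 0 < a) by (unfold a, kE; lra). assert (Hd0 : 0 < d) by (unfold d, kI; lra).
  assert (Hbb : 0 < bb) by (unfold bb; nra). assert (Hc0 : 0 < c) by (unfold c; lra).
  assert (Had : a * d < bb * c).
  { rewrite (Rv_eq p H) in H1. unfold a, d, bb, c. apply Rgt_lt in H1.
    assert (0 < kE p * kI p) by (apply Rmult_lt_0_compat; [unfold kE|unfold kI]; lra).
    apply (Rmult_lt_compat_r (kE p * kI p)) in H1; auto.
    replace (gamma p * beta p * S0 p / (kE p * kI p) * (kE p * kI p)) with (gamma p * beta p * S0 p) in H1 by (field; split; [unfold kI|unfold kE]; lra). lra. }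
  set (P := pch a bb c d). set (Rr := rch a bb c d).
  destruct (s12_pos a bb c d Ha0 Hbb Hc0 Hd0 Had) as [Hs1 Hs2].
  set (m := Rmin (a * s1 a bb c d) (d * s2 a bb c d)).
  assert (Hm0 : 0 < m) by (unfold m; apply Rmin_pos; lra).
  assert (Hm1 : m <= a * s1 a bb c d) by apply Rmin_l. assert (Hm2 : m <= d * s2 a bb c d) by apply Rmin_r.
  set (Mv := Rabs P + 1 + Rabs Rr).
  assert (HMv : 0 < Mv) by (unfold Mv; pose proof (Rabs_pos P); pose proof (Rabs_pos Rr); lra).
  assert (HP1 : 0 < Rabs P + 1) by (pose proof (Rabs_pos P); lra).
  set (eps0 := Rmin (1/2) (m / (4 * beta p * (Rabs P + 1)))).
  assert (He0 : 0 < eps0) by (unfold eps0; apply Rmin_pos; [lra|apply Rdiv_lt_0_compat; [lra|nra]]).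
  assert (He1 : eps0 <= 1/2) by apply Rmin_l.
  assert (He2 : eps0 <= m / (4 * beta p * (Rabs P + 1))) by apply Rmin_r.
  destruct (W_pos_dir P Rr (pr_lt1 a bb c d Ha0 Hbb Hc0 Hd0 Had)) as [es [is Hwpos]].
  destruct (Hst eps0 He0) as [del [Hdel Hstab]].
  set (mn := Rmin del eps0).
  assert (Hmn : 0 < mn) by (unfold mn; apply Rmin_pos; lra).
  set (zeta := mn / (2 * (Rabs es + Rabs is + 1))).
  assert (Hz : 0 < zeta) by (unfold zeta; apply Rdiv_lt_0_compat; [lra|pose proof (Rabs_pos es); pose proof (Rabs_pos is); lra]).
  set (x0 := fun j : nat => match j with 0%nat => S0 p | 1%nat => V0 p | 2%nat => zeta * es | 3%nat => zeta * is | _ => 0 end).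
  assert (HM : 0 <= S0 p + 1) by lra.
  assert (HK : 0 < Kf p (S0 p + 1)) by (unfold Kf; nra).
  destruct (picard (Fm p (S0 p + 1)) (Kf p (S0 p + 1)) x0 HK (Fm_lip p (S0 p + 1) H HM)) as [Y [HY0 [HYc HYd]]].
  set (y := mkY Y).
  assert (Hinit : sq6 (y 0) (E0 p) < mn^2).
  { unfold sq6. change (sS (y 0)) with (Y 0%nat 0). change (sV (y 0)) with (Y 1%nat 0). change (sE (y 0)) with (Y 2%nat 0).
    change (sI (y 0)) with (Y 3%nat 0). change (sT (y 0)) with (Y 4%nat 0). change (sR (y 0)) with (Y 5%nat 0).
    rewrite !HY0 by lia.
    change (x0 0%nat) with (S0 p). change (x0 1%nat) with (V0 p). change (x0 2%nat) with (zeta * es).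
    change (x0 3%nat) with (zeta * is). change (x0 4%nat) with 0. change (x0 5%nat) with 0.
    change (sS (E0 p)) with (S0 p). change (sV (E0 p)) with (V0 p).
    replace (sE (E0 p)) with 0 by reflexivity. replace (sI (E0 p)) with 0 by reflexivity.
    replace (sT (E0 p)) with 0 by reflexivity. replace (sR (E0 p)) with 0 by reflexivity.
    assert (Hzb : zeta * (Rabs es + Rabs is + 1) = mn / 2) by (unfold zeta; field; pose proof (Rabs_pos es); pose proof (Rabs_pos is); lra).
    pose proof (Rabs_pos es). pose proof (Rabs_pos is).
    assert (Hes : (zeta * es)^2 <= (zeta * Rabs es)^2) by (rewrite <- (pow2_abs (zeta * es)), Rabs_mult, (Rabs_right zeta) by lra; lra).
    assert (His : (zeta * is)^2 <= (zeta * Rabs is)^2) by (rewrite <- (pow2_abs (zeta * is)), Rabs_mult, (Rabs_right zeta) by lra; lra).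
    assert (zeta * Rabs es + zeta * Rabs is <= mn / 2) by nra.
    assert (0 <= zeta * Rabs es) by nra. assert (0 <= zeta * Rabs is) by nra.
    replace (S0 p - S0 p) with 0 by ring. replace (V0 p - V0 p) with 0 by ring.
    nra. }
  assert (Hinit2 : sq6 (y 0) (E0 p) < eps0^2).
  { assert (mn <= eps0) by apply Rmin_r. assert (mn^2 <= eps0^2) by (apply pow_incr; lra). lra. }
  assert (Hinitd : dist6 (y 0) (E0 p) < del).
  { apply dist_lt; auto. assert (mn <= del) by apply Rmin_l. assert (mn^2 <= del^2) by (apply pow_incr; lra). lra. }
  set (g := fun u => sq6 (y u) (E0 p)).
  assert (Hgc : forall t, continuity_pt g t) by (intros; apply sq6_mkY_cont; auto).
  assert (H4e : (2 * eps0)^2 <= 1) by nra.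
  assert (HA : forall t, 0 <= t -> g t < (2 * eps0)^2).
  { intros t1 Ht1. destruct (Rlt_le_dec (g t1) ((2 * eps0)^2)) as [l|l]; auto. exfalso.
    assert (g 0 < (2 * eps0)^2) by (unfold g; nra).
    destruct (first_exit g ((2 * eps0)^2) t1 Ht1 H0 l (rc_of_cont g (Hgc 0))) as [tau [Htau [Hgt Hbel]]].
    { intros s _. apply Hgc. }
    assert (Hsol : is_solution p (Finite tau) y).
    { apply mkY_sol; auto. simpl; lra. intros s Hs Hst'. simpl in Hst'. fold y. fold (g s). 
      assert (g s < (2 * eps0)^2) by (apply Hbel; lra). lra. }
    assert (Hin : forall s, 0 <= s < tau -> g s < eps0^2).
    { intros s Hs. apply dist_lt; auto. apply (Hstab (Finite tau) y Hsol Hinitd s); simpl; lra. }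
    destruct (cont_delta g tau (g tau - eps0^2) (Hgc tau) ltac:(nra)) as [dl [Hdl Hdl']].
    set (s := Rmax 0 (tau - dl / 2)).
    assert (Hs : 0 <= s < tau) by (unfold s; split; [apply Rmax_l|apply Rmax_lub_lt; lra]).
    assert (Rabs (s - tau) < dl).
    { unfold s. unfold Rmax. destruct (Rle_dec 0 (tau - dl/2)); rewrite Rabs_left by lra; lra. }
    specialize (Hdl' s H2). apply Rabs_def2 in Hdl'. specialize (Hin s Hs). lra. }
  assert (Hsol : is_solution p p_infty y).
  { apply mkY_sol; auto. simpl; auto. intros s Hs _. fold y. fold (g s). specialize (HA s ltac:(lra)). lra. }
  assert (Hsmall : forall t, 0 <= t -> g t < eps0^2).
  { intros t Ht. apply dist_lt; auto. apply (Hstab p_infty y Hsol Hinitd t Ht I). }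
  set (W := fun u => Wf P Rr (Y 2%nat u) (Y 3%nat u)).
  set (cW := m / Mv).
  assert (HcW : 0 < cW) by (unfold cW; apply Rdiv_lt_0_compat; lra).
  destruct Hsol as [_ [Hder _]].
  set (Wd := fun t => 2 * P * Y 2%nat t * fE p (y t) + 2 * (fE p (y t) * Y 3%nat t + Y 2%nat t * fI p (y t)) + 2 * Rr * Y 3%nat t * fI p (y t)).
  assert (HWd : forall t, 0 < t -> is_derive W t (Wd t)).
  { intros t Ht. destruct (Hder t Ht I) as (_&_&D2&D3&_). apply cheta_deriv; assumption. }
  assert (HWg : forall t, 0 < t -> cW * W t <= Wd t).
  { intros t Ht. specialize (Hsmall t ltac:(lra)). unfold g in Hsmall.
    destruct (comp_le_sq6 (y t) (E0 p)) as [C1 C2].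
    assert (HX : Rabs (sS (y t) - S0 p) <= m / (2 * beta p * (Rabs P + 1))).
    { apply Rlt_le. apply Rlt_le_trans with eps0. apply sq_lt_abs; auto. unfold S0. lra.
      eapply Rle_trans. exact He2. apply Rmult_le_compat_l. lra. apply Rinv_le_contravar. nra. nra. }
    set (e := Y 2%nat t). set (i := Y 3%nat t).
    assert (HfE : fE p (y t) = bb * i + beta p * (sS (y t) - S0 p) * i - a * e).
    { rewrite fE_dev. unfold bb, a, e, i, y, mkY. simpl. ring. }
    assert (HfI : fI p (y t) = c * e - d * i).
    { unfold fI, c, d, kI, e, i, y, mkY. simpl. ring. }
    unfold Wd. fold e i. rewrite HfE, HfI. fold P Rr.
    pose proof (chet_identity a bb c d (beta p) (sS (y t) - S0 p) e i Ha0 Hbb Hc0 Hd0) as Hid.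
    change (pch a bb c d) with P in Hid. change (rch a bb c d) with Rr in Hid. rewrite Hid.
    pose proof (pert_bound P (beta p) (sS (y t) - S0 p) e i m Hb Hm0 HX) as Hpb.
    pose proof (Rle_abs (- (2 * (P * e + i) * (beta p * (sS (y t) - S0 p) * i)))) as Hpb2. rewrite Rabs_Ropp in Hpb2.
    pose proof (W_bound P Rr e i) as Hwb. fold Mv in Hwb.
    assert (0 <= e * e) by nra. assert (0 <= i * i) by nra.
    assert (W t <= Mv * (e * e + i * i)) by (unfold W; fold e i; pose proof (Rle_abs (Wf P Rr e i)); lra).
    assert (cW * W t <= m * (e * e + i * i)).
    { unfold cW. replace (m / Mv * W t) with (m * (W t / Mv)) by (field; lra). apply Rmult_le_compat_l. lra.
      apply (Rmult_le_reg_r Mv). lra. unfold Rdiv. rewrite Rmult_assoc, Rinv_l by lra. lra. }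
    assert (2 * (a * s1 a bb c d) * (e * e) >= 2 * m * (e * e)) by nra.
    assert (2 * (d * s2 a bb c d) * (i * i) >= 2 * m * (i * i)) by nra.
    lra. }
  assert (HWrc : rc W).
  { apply rc_of_cont. unfold W, Wf. cont_tac; apply HYc; lia. }
  pose proof (growth W Wd cW HcW HWrc HWd HWg) as Hgrow.
  assert (HW0 : W 0 = zeta^2 * Wf P Rr es is).
  { unfold W. rewrite !HY0 by lia. unfold x0, Wf. ring. }
  assert (HW0p : 0 < W 0) by (rewrite HW0; apply Rmult_lt_0_compat; [apply pow_lt|]; lra).
  set (T := Mv / (W 0 * cW)).
  assert (HT : 0 <= T) by (unfold T; apply Rlt_le, Rdiv_lt_0_compat; [lra|nra]).
  specialize (Hgrow T HT).
  assert (HWT : W T <= Mv).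
  { specialize (Hsmall T HT). unfold g in Hsmall. unfold W.
    pose proof (W_bound P Rr (Y 2%nat T) (Y 3%nat T)) as Hwb. fold Mv in Hwb.
    unfold sq6 in Hsmall. change (sE (y T)) with (Y 2%nat T) in Hsmall. change (sI (y T)) with (Y 3%nat T) in Hsmall.
    replace (sE (E0 p)) with 0 in Hsmall by reflexivity. replace (sI (E0 p)) with 0 in Hsmall by reflexivity.
    pose proof (pow2_ge_0 (sS (y T) - sS (E0 p))). pose proof (pow2_ge_0 (sV (y T) - sV (E0 p))).
    pose proof (pow2_ge_0 (sT (y T) - sT (E0 p))). pose proof (pow2_ge_0 (sR (y T) - sR (E0 p))).
    assert (Y 2%nat T * Y 2%nat T + Y 3%nat T * Y 3%nat T <= 1) by nra.
    pose proof (Rle_abs (Wf P Rr (Y 2%nat T) (Y 3%nat T))). nra. }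
  assert (Hexp : Mv < W 0 * exp (cW * T)).
  { pose proof (exp_ineq1_le (cW * T)) as Hx.
    assert (HcT : cW * T = Mv / W 0) by (unfold T; field; lra).
    assert (Hq : W 0 * (1 + Mv / W 0) <= W 0 * exp (cW * T)) by (rewrite HcT; apply Rmult_le_compat_l; [lra|rewrite <- HcT; lra]).
    replace (W 0 * (1 + Mv / W 0)) with (W 0 + Mv) in Hq by (field; lra). lra. }
  assert (exp (- cW * T) * exp (cW * T) = 1) by (rewrite <- exp_plus; replace (- cW * T + cW * T) with 0 by ring; apply exp_0).
  pose proof (exp_pos (- cW * T)). pose proof (exp_pos (cW * T)).
  assert (W 0 * exp (cW * T) <= W T) by nra.
  lra.
Qed.


Theorem theorem3 (p : params) (Hp : params_pos p) :
  (Rv p < 1 -> loc_asym_stable p (E0 p)) /\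
  (Rv p > 1 -> unstable p (E0 p)).
Proof.
  split; intros H.
  - apply stable_part; auto.
  - apply unstable_part; auto.
Qed.
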